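(* The bilinear form $\omega(X,Y)=\operatorname{tr}_c\big(X[D,Y]\big)$ is a continuous Lie algebra $2$-cocycle on $\mathfrak g$, i.e. it is skew-symmetric and satisfies $\omega(X,[Y,Z])+\omega(Y,[Z,X])+\omega(Z,[X,Y])=0$ for all $X,Y,Z\in\mathfrak g$. It defines a non-trivial central extension of $\mathfrak g$: there is no continuous linear functional $\theta\colon\mathfrak g\to\mathbb C$ with $\omega(X,Y)=\theta([X,Y])$ for all $X,Y\in\mathfrak g$.
   Context: Let $H$ be a complex separable Hilbert space with orthonormal basis $\{e_n\}_{n\in\mathbb Z}$, and let $D$ be the unbounded self-adjoint operator with $De_n=ne_n$. Let $\mathfrak g$ be the real Lie algebra of bounded skew-adjoint operators $X$ on $H$ such that $[D,X]$ is Hilbert--Schmidt. It is a Banach Lie algebra with norm $\|X\|=\sup_n|\langle e_n,Xe_n\rangle|+\|[D,X]\|_2$, where $\|\cdot\|_2$ is the Hilbert--Schmidt norm. The conditional trace is $\operatorname{tr}_c(T)=\sum_{n\in\mathbb Z}\langle e_n,Te_n\rangle$. For $X,Y\in\mathfrak g$ the series defining $\operatorname{tr}_c(X[D,Y])$ converges absolutely. *)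

(* Defs.v *)
(* classical reals. Complex numbers are modelled as pairs of reals.
   H = l^2(Z) with basis e_n; an operator is represented by its matrix
   a m n = <e_m, X e_n>. *)
From Stdlib Require Import Reals ZArith ClassicalEpsilon.
Open Scope R_scope.

Definition Cx := (R * R)%type.
Definition C0 : Cx := (0, 0).
Definition Cadd (z w : Cx) : Cx := (fst z + fst w, snd z + snd w).
Definition Copp (z : Cx) : Cx := (- fst z, - snd z).
Definition Csub (z w : Cx) : Cx := Cadd z (Copp w).
Definition Cmul (z w : Cx) : Cx :=
  (fst z * fst w - snd z * snd w, fst z * snd w + snd z * fst w).
Definition Cconj (z : Cx) : Cx := (fst z, - snd z).
Definition Cscal (r : R) (z : Cx) : Cx := (r * fst z, r * snd z).
Definition Cnorm2 (z : Cx) : R := fst z * fst z + snd z * snd z.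
Definition Cabs (z : Cx) : R := sqrt (Cnorm2 z).

(* the limit of a real sequence (meaningful when it converges) *)
Definition lim (u : nat -> R) : R := epsilon (inhabits 0) (fun l => Un_cv u l).
(* least upper bound of a set of reals (meaningful when bounded, nonempty) *)
Definition lub (E : R -> Prop) : R := epsilon (inhabits 0) (fun l => is_lub E l).

(* sum_{k=-N}^{N} f k *)
Definition zsum_range (N : nat) (f : Z -> R) : R :=
  sum_f_R0 (fun i => f (Z.of_nat i - Z.of_nat N)%Z) (2 * N).
Definition csum_range (N : nat) (f : Z -> Cx) : Cx :=
  (zsum_range N (fun k => fst (f k)), zsum_range N (fun k => snd (f k))).
(* sum_{k in Z} f k, as limit of the symmetric partial sums *)
Definition csum (f : Z -> Cx) : Cx :=
  (lim (fun N => zsum_range N (fun k => fst (f k))),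
   lim (fun N => zsum_range N (fun k => snd (f k)))).

Definition mat := Z -> Z -> Cx.
Definition madd (a b : mat) : mat := fun m n => Cadd (a m n) (b m n).
Definition mscal (r : R) (a : mat) : mat := fun m n => Cscal r (a m n).
Definition msub (a b : mat) : mat := fun m n => Csub (a m n) (b m n).
Definition mmul (a b : mat) : mat := fun m n => csum (fun k => Cmul (a m k) (b k n)).
Definition bracket (a b : mat) : mat := msub (mmul a b) (mmul b a).
(* [D, X] with D e_n = n e_n : entries (m - n) a m n *)
Definition commD (a : mat) : mat := fun m n => Cscal (IZR (m - n)) (a m n).

Definition bounded_op (a : mat) : Prop :=
  exists M : R, forall (N K : nat) (v : Z -> Cx),
    zsum_range K (fun m => Cnorm2 (csum_range N (fun n => Cmul (a m n) (v n))))
    <= M * zsum_range N (fun n => Cnorm2 (v n)).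
Definition skew_adjoint (a : mat) : Prop :=
  forall m n, a m n = Copp (Cconj (a n m)).
Definition hs_partial (a : mat) (N : nat) : R :=
  zsum_range N (fun m => zsum_range N (fun n => Cnorm2 (a m n))).
Definition hilbert_schmidt (a : mat) : Prop :=
  exists M : R, forall N : nat, hs_partial a N <= M.

Definition in_g (a : mat) : Prop :=
  bounded_op a /\ skew_adjoint a /\ hilbert_schmidt (commD a).

Definition gnorm (a : mat) : R :=
  lub (fun r => exists n : Z, r = Cabs (a n n))
  + sqrt (lim (hs_partial (commD a))).

Definition tr_c (a : mat) : Cx := csum (fun n => a n n).
Definition omega (a b : mat) : Cx := tr_c (mmul a (commD b)).

(* Main.v *)
Require Import Defs.
From Stdlib Require Import Reals ZArith.
From Stdlib Require Import Lia Lra Psatz ClassicalEpsilon FunctionalExtensionality.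
Open Scope R_scope.

Fixpoint zs (N : nat) (f : Z -> R) : R :=
  match N with
  | O => f 0%Z
  | S n => zs n f + f (Z.of_nat (S n)) + f (- Z.of_nat (S n))%Z
  end.

Lemma zs_S : forall N f, zs (S N) f = zs N f + f (Z.of_nat (S N)) + f (- Z.of_nat (S N))%Z.
Proof. reflexivity. Qed.

Lemma sum_shift : forall g m, sum_f_R0 g (S m) = g 0%nat + sum_f_R0 (fun i => g (S i)) m.
Proof.
  intros g m; induction m.
  - simpl; ring.
  - change (sum_f_R0 g (S (S m))) with (sum_f_R0 g (S m) + g (S (S m))).
    rewrite IHm. simpl. ring.
Qed.

Lemma sum_ext_nat : forall f g m, (forall i, (i <= m)%nat -> f i = g i) -> sum_f_R0 f m = sum_f_R0 g m.
Proof.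
  intros f g m; induction m; intros H; simpl.
  - apply H; lia.
  - rewrite IHm by (intros; apply H; lia). rewrite H by lia. reflexivity.
Qed.

Lemma zsum_range_zs : forall N f, zsum_range N f = zs N f.
Proof.
  intros N f; unfold zsum_range; induction N.
  - simpl. f_equal.
  - replace (2 * S N)%nat with (S (S (2 * N))) by lia.
    change (sum_f_R0 (fun i : nat => f (Z.of_nat i - Z.of_nat (S N))%Z) (S (S (2 * N))))
      with (sum_f_R0 (fun i : nat => f (Z.of_nat i - Z.of_nat (S N))%Z) (S (2 * N))
            + f (Z.of_nat (S (S (2*N))) - Z.of_nat (S N))%Z).
    rewrite sum_shift. change (zs (S N) f) with (zs N f + f (Z.of_nat (S N)) + f (- Z.of_nat (S N))%Z). rewrite <- IHN.
    rewrite (sum_ext_nat _ (fun i : nat => f (Z.of_nat i - Z.of_nat N)%Z)).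
    2:{ intros i _. f_equal. lia. }
    replace (Z.of_nat (S (S (2 * N))) - Z.of_nat (S N))%Z with (Z.of_nat (S N)) by lia.
    replace (Z.of_nat 0 - Z.of_nat (S N))%Z with (- Z.of_nat (S N))%Z by lia.
    ring.
Qed.

Lemma zs_ext_r : forall N f g, (forall k, (Z.abs k <= Z.of_nat N)%Z -> f k = g k) -> zs N f = zs N g.
Proof.
  intros N f g; induction N; intros H; simpl.
  - apply H; simpl; lia.
  - rewrite IHN by (intros; apply H; lia). rewrite !H by lia. reflexivity.
Qed.

Lemma zs_ext : forall N f g, (forall k, f k = g k) -> zs N f = zs N g.
Proof. intros; apply zs_ext_r; auto. Qed.

Lemma zs_plus : forall N f g, zs N (fun k => f k + g k) = zs N f + zs N g.
Proof. intros N f g; induction N; simpl; try rewrite IHN; ring. Qed.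
Lemma zs_scal : forall N c f, zs N (fun k => c * f k) = c * zs N f.
Proof. intros N c f; induction N; simpl; try rewrite IHN; ring. Qed.
Lemma zs_opp : forall N f, zs N (fun k => - f k) = - zs N f.
Proof. intros N f; induction N; simpl; try rewrite IHN; ring. Qed.
Lemma zs_minus : forall N f g, zs N (fun k => f k - g k) = zs N f - zs N g.
Proof. intros N f g; induction N; simpl; try rewrite IHN; ring. Qed.
Lemma zs_const0 : forall N, zs N (fun _ => 0) = 0.
Proof. intros N; induction N; simpl; try rewrite IHN; ring. Qed.
Lemma zs_le : forall N f g, (forall k, f k <= g k) -> zs N f <= zs N g.
Proof. intros N f g H; induction N.
  - simpl; apply H.
  - change (zs (S N) f) with (zs N f + f (Z.of_nat (S N)) + f (- Z.of_nat (S N))%Z).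
    change (zs (S N) g) with (zs N g + g (Z.of_nat (S N)) + g (- Z.of_nat (S N))%Z).
    pose proof (H (Z.of_nat (S N))); pose proof (H (- Z.of_nat (S N))%Z); lra. Qed.
Lemma zs_nonneg : forall N f, (forall k, 0 <= f k) -> 0 <= zs N f.
Proof. intros. rewrite <- (zs_const0 N). apply zs_le; auto. Qed.
Lemma zs_abs : forall N f, Rabs (zs N f) <= zs N (fun k => Rabs (f k)).
Proof. intros N f; induction N; simpl.
  - lra.
  - eapply Rle_trans. apply Rabs_triang. eapply Rle_trans. apply Rplus_le_compat_r. apply Rabs_triang. lra. Qed.
Lemma zs_mono1 : forall N f, (forall k, 0 <= f k) -> zs N f <= zs (S N) f.
Proof. intros. rewrite zs_S. pose proof (H (Z.of_nat (S N))); pose proof (H (- Z.of_nat (S N))%Z). lra. Qed.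
Lemma zs_mono : forall N M f, (forall k, 0 <= f k) -> (N <= M)%nat -> zs N f <= zs M f.
Proof. intros N M f H HNM; induction HNM. lra. eapply Rle_trans. apply IHHNM. apply zs_mono1; auto. Qed.
Lemma zs_term : forall N f k, (forall k, 0 <= f k) -> (Z.abs k <= Z.of_nat N)%Z -> f k <= zs N f.
Proof.
  intros N f k H; induction N; intros Hk.
  - simpl. replace k with 0%Z by lia. lra.
  - destruct (Z.eq_dec k (Z.of_nat (S N))) as [->|n1].
    + rewrite zs_S. pose proof (zs_nonneg N f H). pose proof (H (- Z.of_nat (S N))%Z). lra.
    + destruct (Z.eq_dec k (- Z.of_nat (S N))%Z) as [->|n2].
      * rewrite zs_S. pose proof (zs_nonneg N f H). pose proof (H (Z.of_nat (S N))). lra.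
      * eapply Rle_trans. apply IHN. lia. apply zs_mono1; auto.
Qed.
Lemma zs_single : forall N f p, (forall k, k <> p -> f k = 0) ->
  zs N f = if Z_le_dec (Z.abs p) (Z.of_nat N) then f p else 0.
Proof.
  intros N f p H; induction N.
  - simpl. destruct (Z_le_dec (Z.abs p) 0).
    + f_equal; lia.
    + apply H; lia.
  - rewrite zs_S, IHN.
    destruct (Z_le_dec (Z.abs p) (Z.of_nat N)); destruct (Z_le_dec (Z.abs p) (Z.of_nat (S N))); try lia.
    + rewrite (H (Z.of_nat (S N))) by lia. rewrite (H (- Z.of_nat (S N))%Z) by lia. ring.
    + destruct (Z.eq_dec p (Z.of_nat (S N))) as [<-|n1].
      * rewrite (H (- p)%Z) by lia. ring.
      * replace p with (- Z.of_nat (S N))%Z by lia. rewrite (H (Z.of_nat (S N))) by lia. ring.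
    + rewrite (H (Z.of_nat (S N))) by lia. rewrite (H (- Z.of_nat (S N))%Z) by lia. ring.
Qed.
Lemma zs_swap : forall N K (f : Z -> Z -> R),
  zs N (fun n => zs K (fun k => f n k)) = zs K (fun k => zs N (fun n => f n k)).
Proof.
  intros N K f; induction N.
  - reflexivity.
  - rewrite zs_S, IHN. rewrite <- !zs_plus. reflexivity.
Qed.

Definition sm (f : Z -> R) : R := lim (fun N => zs N f).
Definition absb (f : Z -> R) : Prop := exists M, forall N, zs N (fun k => Rabs (f k)) <= M.

Lemma lim_spec : forall u l, Un_cv u l -> lim u = l.
Proof.
  intros u l H. unfold lim.
  assert (E : exists l, Un_cv u l) by (exists l; exact H).
  pose proof (epsilon_spec (inhabits 0) (fun l => Un_cv u l) E) as H2.
  eapply UL_sequence; eauto.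
Qed.

Lemma cv_le : forall u l M, Un_cv u l -> (forall N, u N <= M) -> l <= M.
Proof.
  intros u l M H HM. apply (Rle_cv_lim (Un := u) (Vn := fun _ => M)); auto.
  intros e He. exists 0%nat. intros. unfold Rdist. rewrite Rminus_diag, Rabs_R0. auto.
Qed.
Lemma cv_ge : forall u l M, Un_cv u l -> (forall N, M <= u N) -> M <= l.
Proof.
  intros u l M H HM. apply (Rle_cv_lim (Un := fun _ => M) (Vn := u)); auto.
  intros e He. exists 0%nat. intros. unfold Rdist. rewrite Rminus_diag, Rabs_R0. auto.
Qed.
Lemma cv_const : forall c, Un_cv (fun _ => c) c.
Proof. intros c e He. exists 0%nat. intros. unfold Rdist. rewrite Rminus_diag, Rabs_R0. auto. Qed.

Lemma cv_mono : forall u M, (forall N, u N <= u (S N)) -> (forall N, u N <= M) -> exists l, Un_cv u l.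
Proof.
  intros u M H1 H2. destruct (growing_cv u) as [l Hl].
  - intro n; apply H1.
  - exists M. intros x [n ->]. apply H2.
  - exists l; exact Hl.
Qed.

Lemma nonneg_cv : forall f M, (forall k, 0 <= f k) -> (forall N, zs N f <= M) ->
  Un_cv (fun N => zs N f) (sm f).
Proof.
  intros f M H HM. destruct (cv_mono (fun N => zs N f) M) as [l Hl].
  - intros; apply zs_mono1; auto.
  - auto.
  - unfold sm. rewrite (lim_spec _ l Hl). exact Hl.
Qed.

Lemma nonneg_le_sm : forall f M N, (forall k, 0 <= f k) -> (forall N, zs N f <= M) -> zs N f <= sm f.
Proof.
  intros f M N H HM. apply (growing_ineq (fun N => zs N f)).
  - intro n; apply zs_mono1; auto.
  - eapply nonneg_cv; eauto.
Qed.

Lemma nonneg_sm_le : forall f M, (forall k, 0 <= f k) -> (forall N, zs N f <= M) -> sm f <= M.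
Proof. intros. eapply cv_le. eapply nonneg_cv; eauto. auto. Qed.

Lemma abs_ge : forall x, - Rabs x <= x <= Rabs x.
Proof. intro x. split. pose proof (Rle_abs (- x)). rewrite Rabs_Ropp in H. lra. apply Rle_abs. Qed.

Lemma absb_cv : forall f, absb f -> Un_cv (fun N => zs N f) (sm f).
Proof.
  intros f [M HM].
  set (fp := fun k => (Rabs (f k) + f k) / 2).
  set (fm := fun k => (Rabs (f k) - f k) / 2).
  assert (Hp : forall k, 0 <= fp k) by (intro k; unfold fp; pose proof (abs_ge (f k)); lra).
  assert (Hm : forall k, 0 <= fm k) by (intro k; unfold fm; pose proof (abs_ge (f k)); lra).
  assert (Bp : forall N, zs N fp <= M).
  { intro N. eapply Rle_trans; [|apply (HM N)]. apply zs_le. intro k; unfold fp.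
    pose proof (abs_ge (f k)); lra. }
  assert (Bm : forall N, zs N fm <= M).
  { intro N. eapply Rle_trans; [|apply (HM N)]. apply zs_le. intro k; unfold fm.
    pose proof (abs_ge (f k)); lra. }
  pose proof (nonneg_cv _ _ Hp Bp) as Cp. pose proof (nonneg_cv _ _ Hm Bm) as Cm.
  pose proof (CV_minus _ _ _ _ Cp Cm) as C.
  assert (C' : Un_cv (fun N => zs N f) (sm fp - sm fm)).
  { eapply Un_cv_ext; [|exact C]. intro N; simpl. rewrite <- zs_minus. apply zs_ext. intro k; unfold fp, fm; field. }
  unfold sm at 1. rewrite (lim_spec _ _ C'). exact C'.
Qed.

Lemma absb_bound : forall f g, (forall k, Rabs (f k) <= g k) -> (exists M, forall N, zs N g <= M) -> absb f.
Proof. intros f g H [M HM]. exists M. intro N. eapply Rle_trans; [|apply HM]. apply zs_le; auto. Qed.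

Lemma absb_plus : forall f g, absb f -> absb g -> absb (fun k => f k + g k).
Proof.
  intros f g [M1 H1] [M2 H2]. apply absb_bound with (g := fun k => Rabs (f k) + Rabs (g k)).
  - intro; apply Rabs_triang.
  - exists (M1 + M2). intro N. rewrite zs_plus. specialize (H1 N); specialize (H2 N); lra.
Qed.
Lemma absb_scal : forall c f, absb f -> absb (fun k => c * f k).
Proof.
  intros c f [M H]. apply absb_bound with (g := fun k => Rabs c * Rabs (f k)).
  - intro; rewrite Rabs_mult; lra.
  - exists (Rabs c * M). intro N. rewrite zs_scal. apply Rmult_le_compat_l. apply Rabs_pos. auto.
Qed.
Lemma absb_opp : forall f, absb f -> absb (fun k => - f k).
Proof. intros f H. apply absb_bound with (g := fun k => Rabs (f k)). intro; rewrite Rabs_Ropp; lra. destruct H as [M H]; exists M; auto. Qed.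
Lemma absb_minus : forall f g, absb f -> absb g -> absb (fun k => f k - g k).
Proof. intros. apply absb_plus; auto. apply absb_opp; auto. Qed.
Lemma absb_abs : forall f, absb f -> absb (fun k => Rabs (f k)).
Proof. intros f [M H]; exists M; intro N; eapply Rle_trans; [|apply (H N)]; apply zs_le; intro; rewrite Rabs_Rabsolu; lra. Qed.

Lemma sm_eq : forall f l, Un_cv (fun N => zs N f) l -> sm f = l.
Proof. intros; unfold sm; apply lim_spec; auto. Qed.

Lemma sm_plus : forall f g, absb f -> absb g -> sm (fun k => f k + g k) = sm f + sm g.
Proof.
  intros f g Hf Hg. apply sm_eq.
  pose proof (CV_plus _ _ _ _ (absb_cv _ Hf) (absb_cv _ Hg)) as C.
  eapply Un_cv_ext; [|exact C]. intro N; simpl. rewrite zs_plus; reflexivity.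
Qed.
Lemma sm_minus : forall f g, absb f -> absb g -> sm (fun k => f k - g k) = sm f - sm g.
Proof.
  intros f g Hf Hg. apply sm_eq.
  pose proof (CV_minus _ _ _ _ (absb_cv _ Hf) (absb_cv _ Hg)) as C.
  eapply Un_cv_ext; [|exact C]. intro N; simpl. rewrite zs_minus; reflexivity.
Qed.
Lemma sm_scal : forall c f, absb f -> sm (fun k => c * f k) = c * sm f.
Proof.
  intros c f Hf. apply sm_eq.
  pose proof (CV_mult _ _ _ _ (cv_const c) (absb_cv _ Hf)) as C.
  eapply Un_cv_ext; [|exact C]. intro N; simpl. rewrite zs_scal; reflexivity.
Qed.
Lemma sm_opp : forall f, absb f -> sm (fun k => - f k) = - sm f.
Proof.
  intros f Hf. replace (- sm f) with (-1 * sm f) by ring. rewrite <- sm_scal by auto.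
  f_equal. apply functional_extensionality; intro; ring.
Qed.
Lemma sm_zero : sm (fun _ => 0) = 0.
Proof. apply sm_eq. eapply Un_cv_ext; [|apply (cv_const 0)]. intro; simpl; rewrite zs_const0; auto. Qed.

Lemma sm_abs : forall f, absb f -> Rabs (sm f) <= sm (fun k => Rabs (f k)).
Proof.
  intros f Hf. pose proof (absb_cv _ Hf) as C1. pose proof (absb_cv _ (absb_abs _ Hf)) as C2.
  apply Rabs_le. split.
  - pose proof (CV_opp _ _ C2) as C3.
    assert (- sm (fun k => Rabs (f k)) <= sm f); [|lra].
    eapply (Rle_cv_lim); [|exact C3|exact C1]. intro n; unfold opp_seq.
    pose proof (zs_abs n f). pose proof (abs_ge (zs n f)). lra.
  - eapply (Rle_cv_lim); [|exact C1|exact C2]. intro n.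
    pose proof (zs_abs n f). pose proof (Rle_abs (zs n f)). lra.
Qed.

Lemma sm_le_abs : forall f M, absb f -> (forall N, zs N (fun k => Rabs (f k)) <= M) -> Rabs (sm f) <= M.
Proof.
  intros f M Hf HM. eapply Rle_trans. apply sm_abs; auto. eapply cv_le. apply absb_cv. apply absb_abs; auto. auto.
Qed.

Lemma cv_zs_fin : forall N (u : nat -> Z -> R) (l : Z -> R),
  (forall n, Un_cv (fun K => u K n) (l n)) -> Un_cv (fun K => zs N (fun n => u K n)) (zs N l).
Proof.
  intros N u l H; induction N.
  - simpl. apply H.
  - rewrite zs_S. eapply Un_cv_ext; [|apply CV_plus; [apply CV_plus; [apply IHN|apply H]|apply H]].
    intro K; simpl. reflexivity.
Qed.

Lemma absb_single : forall f p, (forall k, k <> p -> f k = 0) -> absb f.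
Proof.
  intros f p H. exists (Rabs (f p)). intro N. rewrite (zs_single N _ p).
  - destruct (Z_le_dec _ _); [lra| apply Rabs_pos].
  - intros k Hk. rewrite H; auto. apply Rabs_R0.
Qed.
Lemma sm_single : forall f p, (forall k, k <> p -> f k = 0) -> sm f = f p.
Proof.
  intros f p H. apply sm_eq. intros e He. exists (Z.to_nat (Z.abs p)). intros n Hn.
  rewrite (zs_single n f p H). destruct (Z_le_dec _ _); [|lia].
  unfold Rdist. rewrite Rminus_diag, Rabs_R0; auto.
Qed.

Definition box N (g : Z -> Z -> R) := zs N (fun n => zs N (fun k => g n k)).
Definition absb2 (f : Z -> Z -> R) := exists M, forall N, box N (fun n k => Rabs (f n k)) <= M.

Lemma box_mono : forall g N N', (forall n k, 0 <= g n k) -> (N <= N')%nat -> box N g <= box N' g.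
Proof.
  intros g N N' H HN. unfold box. eapply Rle_trans.
  - apply zs_le. intro n. apply (zs_mono N N'); auto.
  - apply zs_mono; auto. intro; apply zs_nonneg; auto.
Qed.

Lemma box_swap : forall N g, box N (fun k n => g n k) = box N g.
Proof. intros; unfold box; rewrite zs_swap; reflexivity. Qed.

Lemma absb2_swap : forall f, absb2 f -> absb2 (fun k n => f n k).
Proof. intros f [M H]; exists M; intro N; rewrite box_swap; auto. Qed.

Lemma row_bound : forall g M n N, (forall n k, 0 <= g n k) -> (forall N, box N g <= M) -> zs N (g n) <= M.
Proof.
  intros g M n N H HM. set (N' := Nat.max N (Z.to_nat (Z.abs n))).
  eapply Rle_trans. apply (zs_mono N N'); auto. lia.
  eapply Rle_trans; [|apply (HM N')]. unfold box.
  apply (zs_term N' (fun n => zs N' (fun k => g n k))). intro; apply zs_nonneg; auto. lia.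
Qed.

Lemma absb2_row : forall f n, absb2 f -> absb (f n).
Proof.
  intros f n [M H]. exists M. intro N. apply (row_bound (fun n k => Rabs (f n k))); auto.
  intros; apply Rabs_pos.
Qed.

Definition bl (g : Z -> Z -> R) := lim (fun N => box N g).

Lemma fub_nn : forall g M, (forall n k, 0 <= g n k) -> (forall N, box N g <= M) ->
  (forall N, zs N (fun n => sm (g n)) <= M) /\ absb (fun n => sm (g n)) /\
  sm (fun n => sm (g n)) = bl g.
Proof.
  intros g M H HM.
  assert (Cb : Un_cv (fun N => box N g) (bl g)).
  { destruct (cv_mono (fun N => box N g) M) as [l Hl]; auto.
    - intro; apply box_mono; auto.
    - unfold bl; rewrite (lim_spec _ _ Hl); auto. }
  assert (Hbl : bl g <= M) by (eapply cv_le; eauto).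
  assert (Hr : forall n, absb (g n)).
  { intro n. exists M. intro N. eapply Rle_trans; [|apply (row_bound g M n N H HM)].
    apply zs_le; intro; rewrite Rabs_pos_eq; auto; lra. }
  assert (Hrpos : forall n, 0 <= sm (g n)).
  { intro n. eapply cv_ge. apply absb_cv; auto. intro; apply zs_nonneg; auto. }
  assert (HP : forall N, zs N (fun n => sm (g n)) <= bl g).
  { intro N. eapply cv_le. apply (cv_zs_fin N (fun K n => zs K (g n))). intro n; apply absb_cv; auto.
    intro K. simpl. eapply Rle_trans. 2: apply (growing_ineq (fun N => box N g)) with (n := Nat.max N K).
    - eapply Rle_trans. apply zs_le. intro n. apply (zs_mono K (Nat.max N K)); auto. lia.
      apply zs_mono. intro; apply zs_nonneg; auto. lia.
    - intro; apply box_mono; auto.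
    - auto. }
  assert (Ha : absb (fun n => sm (g n))).
  { exists (bl g). intro N. eapply Rle_trans; [|apply (HP N)]. apply zs_le; intro; rewrite Rabs_pos_eq; auto; lra. }
  split; [intro N; eapply Rle_trans; [apply HP|auto]|]. split; auto.
  apply Rle_antisym.
  - apply (nonneg_sm_le _ (bl g)); auto.
  - eapply cv_le. exact Cb. intro N. eapply Rle_trans.
    2: apply (nonneg_le_sm _ (bl g)); auto.
    unfold box. apply zs_le. intro n. apply (nonneg_le_sm _ M). intro; auto. intro; apply (row_bound g M n); auto.
Qed.

Lemma absb2_col : forall f, absb2 f -> absb (fun n => sm (f n)).
Proof.
  intros f Hf. pose proof Hf as [M HM].
  destruct (fub_nn (fun n k => Rabs (f n k)) M) as [H1 _]; auto. intros; apply Rabs_pos.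
  apply absb_bound with (g := fun n => sm (fun k => Rabs (f n k))).
  - intro n. apply sm_abs. apply absb2_row; auto.
  - exists M; auto.
Qed.

Lemma fubini : forall f, absb2 f -> sm (fun n => sm (f n)) = sm (fun k => sm (fun n => f n k)).
Proof.
  intros f Hf. pose proof Hf as [M HM].
  set (fp := fun n k => (Rabs (f n k) + f n k) / 2).
  set (fm := fun n k => (Rabs (f n k) - f n k) / 2).
  assert (Hp : forall n k, 0 <= fp n k) by (intros; unfold fp; pose proof (abs_ge (f n k)); lra).
  assert (Hm : forall n k, 0 <= fm n k) by (intros; unfold fm; pose proof (abs_ge (f n k)); lra).
  assert (Bp : forall N, box N fp <= M).
  { intro N. eapply Rle_trans; [|apply (HM N)]. unfold box; apply zs_le; intro n; apply zs_le; intro k; unfold fp.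
    pose proof (abs_ge (f n k)); lra. }
  assert (Bm : forall N, box N fm <= M).
  { intro N. eapply Rle_trans; [|apply (HM N)]. unfold box; apply zs_le; intro n; apply zs_le; intro k; unfold fm.
    pose proof (abs_ge (f n k)); lra. }
  assert (Bp' : forall N, box N (fun k n => fp n k) <= M) by (intro; rewrite box_swap; auto).
  assert (Bm' : forall N, box N (fun k n => fm n k) <= M) by (intro; rewrite box_swap; auto).
  destruct (fub_nn fp M Hp Bp) as [_ [Ap Ep]].
  destruct (fub_nn fm M Hm Bm) as [_ [Am Em]].
  destruct (fub_nn (fun k n => fp n k) M (fun k n => Hp n k) Bp') as [_ [Ap' Ep']].
  destruct (fub_nn (fun k n => fm n k) M (fun k n => Hm n k) Bm') as [_ [Am' Em']].
  assert (Rp : forall n, absb (fp n)) by (intro n; exists M; intro N; eapply Rle_trans; [|apply (row_bound fp M n N Hp Bp)]; apply zs_le; intro; rewrite Rabs_pos_eq; auto; lra).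
  assert (Rm : forall n, absb (fm n)) by (intro n; exists M; intro N; eapply Rle_trans; [|apply (row_bound fm M n N Hm Bm)]; apply zs_le; intro; rewrite Rabs_pos_eq; auto; lra).
  assert (Rp' : forall k, absb (fun n => fp n k)) by (intro n; exists M; intro N; eapply Rle_trans; [|apply (row_bound (fun k n => fp n k) M n N (fun k n => Hp n k) Bp')]; apply zs_le; intro; rewrite Rabs_pos_eq; auto; lra).
  assert (Rm' : forall k, absb (fun n => fm n k)) by (intro n; exists M; intro N; eapply Rle_trans; [|apply (row_bound (fun k n => fm n k) M n N (fun k n => Hm n k) Bm')]; apply zs_le; intro; rewrite Rabs_pos_eq; auto; lra).
  assert (E1 : forall n, sm (f n) = sm (fp n) - sm (fm n)).
  { intro n. rewrite <- sm_minus; auto. f_equal. apply functional_extensionality; intro k; unfold fp, fm; field. }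
  assert (E2 : forall k, sm (fun n => f n k) = sm (fun n => fp n k) - sm (fun n => fm n k)).
  { intro k. rewrite <- sm_minus; auto. f_equal. apply functional_extensionality; intro n; unfold fp, fm; field. }
  rewrite (functional_extensionality _ _ E1), (functional_extensionality _ _ E2).
  rewrite !sm_minus; auto.
  rewrite Ep, Em, Ep', Em'. unfold bl. f_equal; f_equal; apply functional_extensionality; intro; rewrite box_swap; auto.
Qed.

Definition box3 N (g : Z -> Z -> Z -> R) := zs N (fun a => box N (g a)).
Definition absb3 (f : Z -> Z -> Z -> R) := exists M, forall N, box3 N (fun a b c => Rabs (f a b c)) <= M.
Definition S3 (f : Z -> Z -> Z -> R) := sm (fun a => sm (fun b => sm (fun c => f a b c))).

Lemma box3_mono : forall g N N', (forall a b c, 0 <= g a b c) -> (N <= N')%nat -> box3 N g <= box3 N' g.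
Proof.
  intros g N N' H HN. unfold box3. eapply Rle_trans.
  - apply zs_le. intro a. apply (box_mono (g a) N N'); auto.
  - apply zs_mono; auto. intro; unfold box; apply zs_nonneg; intro; apply zs_nonneg; auto.
Qed.

Lemma box3_gen : forall g N1 N2 N3 M, (forall a b c, 0 <= g a b c) -> (N1 <= M)%nat -> (N2 <= M)%nat -> (N3 <= M)%nat ->
  zs N1 (fun a => zs N2 (fun b => zs N3 (fun c => g a b c))) <= box3 M g.
Proof.
  intros g N1 N2 N3 M H H1 H2 H3. unfold box3, box.
  eapply Rle_trans. apply zs_le; intro a; apply zs_le; intro b; apply (zs_mono N3 M); auto.
  eapply Rle_trans. apply zs_le; intro a; apply (zs_mono N2 M); auto. intro; apply zs_nonneg; auto.
  apply zs_mono; auto. intro; apply zs_nonneg; intro; apply zs_nonneg; auto.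
Qed.

Lemma absb3_slice : forall f a, absb3 f -> absb2 (f a).
Proof.
  intros f a [M H]. exists M. intro N. set (N' := Nat.max N (Z.to_nat (Z.abs a))).
  eapply Rle_trans. apply (box_mono _ N N'). intros; apply Rabs_pos. lia.
  eapply Rle_trans; [|apply (H N')]. unfold box3.
  apply (zs_term N' (fun a => box N' (fun b c => Rabs (f a b c)))).
  intro; unfold box; apply zs_nonneg; intro; apply zs_nonneg; intro; apply Rabs_pos. lia.
Qed.

Lemma absb3_inner : forall f, absb3 f -> absb2 (fun a b => sm (f a b)).
Proof.
  intros f Hf. pose proof Hf as [M HM]. exists M. intro N.
  assert (Hab : forall a b, absb (f a b)) by (intros; apply absb2_row; apply absb3_slice; auto).
  eapply Rle_trans.
  - unfold box. apply zs_le; intro a; apply zs_le; intro b. apply sm_abs. auto.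
  - eapply cv_le.
    + apply (cv_zs_fin N (fun K a => zs N (fun b => zs K (fun c => Rabs (f a b c))))).
      intro a. apply cv_zs_fin. intro b. apply absb_cv. apply absb_abs; auto.
    + intro K. simpl. eapply Rle_trans; [|apply (HM (Nat.max N K))].
      apply box3_gen; try lia. intros; apply Rabs_pos.
Qed.

Lemma absb3_swap23 : forall f, absb3 f -> absb3 (fun a b c => f a c b).
Proof. intros f [M H]; exists M; intro N; unfold box3; erewrite zs_ext; [apply (H N)|]. intro a; simpl. rewrite <- box_swap. reflexivity. Qed.

Lemma absb3_swap12 : forall f, absb3 f -> absb3 (fun a b c => f b a c).
Proof. intros f [M H]; exists M; intro N. unfold box3, box. rewrite zs_swap. apply (H N). Qed.

Lemma S3_swap23 : forall f, absb3 f -> S3 (fun a b c => f a c b) = S3 f.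
Proof.
  intros f Hf. unfold S3. f_equal. apply functional_extensionality; intro a.
  symmetry. apply fubini. apply absb3_slice; auto.
Qed.

Lemma S3_swap12 : forall f, absb3 f -> S3 (fun a b c => f b a c) = S3 f.
Proof.
  intros f Hf. unfold S3. symmetry. apply (fubini (fun a b => sm (f a b))). apply absb3_inner; auto.
Qed.

Lemma absb3_rot : forall f, absb3 f -> absb3 (fun a b c => f b c a).
Proof. intros. apply (absb3_swap12 (fun a b c => f a c b)). apply absb3_swap23; auto. Qed.

Lemma S3_rot : forall f, absb3 f -> S3 (fun a b c => f b c a) = S3 f.
Proof.
  intros f Hf. rewrite (S3_swap12 (fun a b c => f a c b)). apply S3_swap23; auto. apply absb3_swap23; auto.
Qed.

Lemma absb3_bound : forall f g M, (forall a b c, Rabs (f a b c) <= g a b c) -> (forall N, box3 N g <= M) -> absb3 f.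
Proof.
  intros f g M H HM. exists M. intro N. eapply Rle_trans; [|apply HM].
  unfold box3, box; apply zs_le; intro; apply zs_le; intro; apply zs_le; intro; auto.
Qed.

Lemma box3_plus : forall N f g, box3 N (fun a b c => f a b c + g a b c) = box3 N f + box3 N g.
Proof.
  intros. unfold box3, box. rewrite <- zs_plus; apply zs_ext; intro a.
  rewrite <- zs_plus; apply zs_ext; intro b. rewrite <- zs_plus; reflexivity.
Qed.
Lemma box3_scal : forall N c f, box3 N (fun a b c' => c * f a b c') = c * box3 N f.
Proof.
  intros. unfold box3, box. rewrite <- zs_scal; apply zs_ext; intro a.
  rewrite <- zs_scal; apply zs_ext; intro b. rewrite <- zs_scal; reflexivity.
Qed.

Lemma absb3_plus : forall f g, absb3 f -> absb3 g -> absb3 (fun a b c => f a b c + g a b c).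
Proof.
  intros f g [M1 H1] [M2 H2]. apply (absb3_bound _ (fun a b c => Rabs (f a b c) + Rabs (g a b c)) (M1 + M2)).
  intros; apply Rabs_triang. intro N. rewrite box3_plus. specialize (H1 N); specialize (H2 N). lra.
Qed.
Lemma absb3_scal : forall c f, absb3 f -> absb3 (fun a b d => c * f a b d).
Proof.
  intros c f [M H]. apply (absb3_bound _ (fun a b d => Rabs c * Rabs (f a b d)) (Rabs c * M)).
  intros; rewrite Rabs_mult; lra. intro N. rewrite box3_scal. apply Rmult_le_compat_l; auto. apply Rabs_pos.
Qed.

Lemma S3_plus : forall f g, absb3 f -> absb3 g -> S3 (fun a b c => f a b c + g a b c) = S3 f + S3 g.
Proof.
  intros f g Hf Hg. unfold S3.
  assert (If := absb3_inner f Hf). assert (Ig := absb3_inner g Hg).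
  rewrite <- sm_plus by (apply (absb2_col (fun a b => sm (f a b))); auto) || (apply (absb2_col (fun a b => sm (g a b))); auto).
  f_equal. apply functional_extensionality; intro a.
  rewrite <- sm_plus by ((apply (absb2_row (fun a b => sm (f a b))); auto) || (apply (absb2_row (fun a b => sm (g a b))); auto)).
  f_equal. apply functional_extensionality; intro b.
  apply sm_plus; apply absb2_row; apply absb3_slice; auto.
Qed.
Lemma S3_scal : forall c f, absb3 f -> S3 (fun a b d => c * f a b d) = c * S3 f.
Proof.
  intros c f Hf. unfold S3. assert (If := absb3_inner f Hf).
  rewrite <- sm_scal by (apply (absb2_col (fun a b => sm (f a b))); auto).
  f_equal. apply functional_extensionality; intro a.
  rewrite <- sm_scal by (apply (absb2_row (fun a b => sm (f a b))); auto).
  f_equal. apply functional_extensionality; intro b.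
  apply sm_scal; apply absb2_row; apply absb3_slice; auto.
Qed.
Lemma S3_zero : S3 (fun _ _ _ => 0) = 0.
Proof. unfold S3. rewrite !sm_zero. reflexivity. Qed.

Definition cn1 (z : Cx) := Rabs (fst z) + Rabs (snd z).
Lemma cn1_pos : forall z, 0 <= cn1 z.
Proof. intros; unfold cn1; pose proof (Rabs_pos (fst z)); pose proof (Rabs_pos (snd z)); lra. Qed.
Lemma cn1_fst : forall z, Rabs (fst z) <= cn1 z.
Proof. intros; unfold cn1; pose proof (Rabs_pos (snd z)); lra. Qed.
Lemma cn1_snd : forall z, Rabs (snd z) <= cn1 z.
Proof. intros; unfold cn1; pose proof (Rabs_pos (fst z)); lra. Qed.
Lemma cn1_mul : forall z w, cn1 (Cmul z w) <= cn1 z * cn1 w.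
Proof.
  intros [a b] [c d]; unfold cn1, Cmul; simpl.
  pose proof (Rabs_triang (a*c) (- (b*d))). pose proof (Rabs_triang (a*d) (b*c)).
  rewrite Rabs_Ropp in H. unfold Rminus. rewrite !Rabs_mult in *.
  pose proof (Rabs_pos a); pose proof (Rabs_pos b); pose proof (Rabs_pos c); pose proof (Rabs_pos d). nra.
Qed.
Lemma cn1_add : forall z w, cn1 (Cadd z w) <= cn1 z + cn1 w.
Proof. intros [a b] [c d]; unfold cn1, Cadd; simpl. pose proof (Rabs_triang a c); pose proof (Rabs_triang b d); lra. Qed.
Lemma cn1_opp : forall z, cn1 (Copp z) = cn1 z.
Proof. intros [a b]; unfold cn1, Copp; simpl. rewrite !Rabs_Ropp; auto. Qed.
Lemma cn1_sub : forall z w, cn1 (Csub z w) <= cn1 z + cn1 w.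
Proof. intros; unfold Csub. rewrite <- (cn1_opp w). apply cn1_add. Qed.
Lemma cn1_scal : forall r z, cn1 (Cscal r z) = Rabs r * cn1 z.
Proof. intros r [a b]; unfold cn1, Cscal; simpl. rewrite !Rabs_mult; ring. Qed.
Lemma Cabs_cn1 : forall z, Cabs z <= cn1 z.
Proof.
  intros [a b]; unfold Cabs, Cnorm2, cn1; simpl.
  pose proof (Rabs_pos a); pose proof (Rabs_pos b).
  rewrite <- (sqrt_Rsqr (Rabs a + Rabs b)) by lra. apply sqrt_le_1_alt.
  assert (a*a = Rabs a * Rabs a) by (rewrite <- Rabs_mult; rewrite Rabs_pos_eq; nra).
  assert (b*b = Rabs b * Rabs b) by (rewrite <- Rabs_mult; rewrite Rabs_pos_eq; nra).
  unfold Rsqr. nra.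
Qed.

Lemma csum_eq : forall f, csum f = (sm (fun k => fst (f k)), sm (fun k => snd (f k))).
Proof.
  intros f. unfold csum, sm. f_equal; f_equal; apply functional_extensionality; intro N; apply zsum_range_zs.
Qed.

Definition absbC (f : Z -> Cx) := absb (fun k => fst (f k)) /\ absb (fun k => snd (f k)).

Lemma absbC_bound : forall f g, (forall k, cn1 (f k) <= g k) -> (exists M, forall N, zs N g <= M) -> absbC f.
Proof.
  intros f g H HM. split; apply (absb_bound _ g); auto; intro k; eapply Rle_trans; try apply H.
  apply cn1_fst. apply cn1_snd.
Qed.

Lemma absbC_cn1 : forall f, absbC f -> exists M, forall N, zs N (fun k => cn1 (f k)) <= M.
Proof.
  intros f [[M1 H1] [M2 H2]]. exists (M1 + M2). intro N. unfold cn1. rewrite zs_plus.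
  specialize (H1 N); specialize (H2 N); lra.
Qed.

Lemma absbC_add : forall f g, absbC f -> absbC g -> absbC (fun k => Cadd (f k) (g k)).
Proof. intros f g [A1 A2] [B1 B2]; split; simpl; apply absb_plus; auto. Qed.
Lemma absbC_opp : forall f, absbC f -> absbC (fun k => Copp (f k)).
Proof. intros f [A1 A2]; split; simpl; apply absb_opp; auto. Qed.
Lemma absbC_sub : forall f g, absbC f -> absbC g -> absbC (fun k => Csub (f k) (g k)).
Proof. intros. apply absbC_add; auto. apply absbC_opp; auto. Qed.
Lemma absbC_mul : forall c f, absbC f -> absbC (fun k => Cmul c (f k)).
Proof. intros c f [A1 A2]; split; simpl; [apply absb_minus|apply absb_plus]; apply absb_scal; auto. Qed.
Lemma absbC_scal : forall r f, absbC f -> absbC (fun k => Cscal r (f k)).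
Proof. intros r f [A1 A2]; split; simpl; apply absb_scal; auto. Qed.

Lemma csum_add : forall f g, absbC f -> absbC g -> csum (fun k => Cadd (f k) (g k)) = Cadd (csum f) (csum g).
Proof. intros f g [A1 A2] [B1 B2]. rewrite !csum_eq. unfold Cadd; simpl. rewrite !sm_plus; auto. Qed.
Lemma csum_opp : forall f, absbC f -> csum (fun k => Copp (f k)) = Copp (csum f).
Proof. intros f [A1 A2]. rewrite !csum_eq. unfold Copp; simpl. rewrite !sm_opp; auto. Qed.
Lemma csum_sub : forall f g, absbC f -> absbC g -> csum (fun k => Csub (f k) (g k)) = Csub (csum f) (csum g).
Proof. intros. unfold Csub. rewrite csum_add; auto. rewrite csum_opp; auto. apply absbC_opp; auto. Qed.
Lemma csum_mul : forall c f, absbC f -> csum (fun k => Cmul c (f k)) = Cmul c (csum f).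
Proof.
  intros c f [A1 A2]. rewrite !csum_eq. unfold Cmul; simpl.
  rewrite sm_minus, sm_plus, !sm_scal; auto; apply absb_scal; auto.
Qed.
Lemma csum_scal : forall r f, absbC f -> csum (fun k => Cscal r (f k)) = Cscal r (csum f).
Proof. intros r f [A1 A2]. rewrite !csum_eq. unfold Cscal; simpl. rewrite !sm_scal; auto. Qed.
Lemma csum_single : forall f p, (forall k, k <> p -> f k = C0) -> csum f = f p.
Proof.
  intros f p H. rewrite csum_eq. rewrite (sm_single _ p), (sm_single (fun k => snd (f k)) p).
  destruct (f p); auto. intros k Hk; rewrite H; auto. intros k Hk; rewrite H; auto.
Qed.
Lemma absbC_single : forall f p, (forall k, k <> p -> f k = C0) -> absbC f.
Proof. intros f p H; split; apply (absb_single _ p); intros k Hk; rewrite H; auto. Qed.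

Definition absbC2 (f : Z -> Z -> Cx) := absb2 (fun n k => fst (f n k)) /\ absb2 (fun n k => snd (f n k)).

Lemma absbC2_bound : forall f g M, (forall n k, cn1 (f n k) <= g n k) -> (forall N, box N g <= M) -> absbC2 f.
Proof.
  intros f g M H HM. split; exists M; intro N; eapply Rle_trans; try apply (HM N);
  unfold box; apply zs_le; intro; apply zs_le; intro; eapply Rle_trans; try apply H.
  apply cn1_fst. apply cn1_snd.
Qed.
Lemma absbC2_row : forall f n, absbC2 f -> absbC (f n).
Proof. intros f n [A1 A2]; split; [apply (absb2_row (fun n k => fst (f n k)) n)|apply (absb2_row (fun n k => snd (f n k)) n)]; auto. Qed.
Lemma absbC2_swap : forall f, absbC2 f -> absbC2 (fun k n => f n k).
Proof. intros f [A1 A2]; split; [apply (absb2_swap (fun n k => fst (f n k)))|apply (absb2_swap (fun n k => snd (f n k)))]; auto. Qed.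
Lemma absbC2_col : forall f, absbC2 f -> absbC (fun n => csum (f n)).
Proof.
  intros f [A1 A2]. split.
  - replace (fun k => fst (csum (f k))) with (fun n => sm (fun k => fst (f n k))).
    apply (absb2_col (fun n k => fst (f n k))); auto.
    apply functional_extensionality; intro; rewrite csum_eq; auto.
  - replace (fun k => snd (csum (f k))) with (fun n => sm (fun k => snd (f n k))).
    apply (absb2_col (fun n k => snd (f n k))); auto.
    apply functional_extensionality; intro; rewrite csum_eq; auto.
Qed.
Lemma cfubini : forall f, absbC2 f -> csum (fun n => csum (f n)) = csum (fun k => csum (fun n => f n k)).
Proof.
  intros f [A1 A2]. rewrite !csum_eq.
  replace (fun k => fst (csum (f k))) with (fun n => sm (fun k => fst (f n k))) by (apply functional_extensionality; intro; rewrite csum_eq; auto).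
  replace (fun k => snd (csum (f k))) with (fun n => sm (fun k => snd (f n k))) by (apply functional_extensionality; intro; rewrite csum_eq; auto).
  replace (fun k => fst (csum (fun n => f n k))) with (fun k => sm (fun n => fst (f n k))) by (apply functional_extensionality; intro; rewrite csum_eq; auto).
  replace (fun k => snd (csum (fun n => f n k))) with (fun k => sm (fun n => snd (f n k))) by (apply functional_extensionality; intro; rewrite csum_eq; auto).
  rewrite (fubini (fun n k => fst (f n k))), (fubini (fun n k => snd (f n k))); auto.
Qed.

Definition absbC3 (f : Z -> Z -> Z -> Cx) := absb3 (fun a b c => fst (f a b c)) /\ absb3 (fun a b c => snd (f a b c)).
Definition S3C (f : Z -> Z -> Z -> Cx) : Cx := (S3 (fun a b c => fst (f a b c)), S3 (fun a b c => snd (f a b c))).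

Lemma csum3 : forall f, csum (fun a => csum (fun b => csum (fun c => f a b c))) = S3C f.
Proof.
  intros f. rewrite csum_eq. unfold S3C, S3.
  replace (fun k => fst (csum (fun b => csum (fun c => f k b c)))) with (fun a => sm (fun b => sm (fun c => fst (f a b c)))).
  replace (fun k => snd (csum (fun b => csum (fun c => f k b c)))) with (fun a => sm (fun b => sm (fun c => snd (f a b c)))).
  reflexivity.
  all: apply functional_extensionality; intro a; rewrite csum_eq; simpl; f_equal; apply functional_extensionality; intro b; unfold sm; f_equal; apply functional_extensionality; intro; symmetry; apply zsum_range_zs.
Qed.

Lemma absbC3_bound : forall f g M, (forall a b c, cn1 (f a b c) <= g a b c) -> (forall N, box3 N g <= M) -> absbC3 f.
Proof.
  intros f g M H HM. split; apply (absb3_bound _ g M); auto; intros; eapply Rle_trans; try apply H.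
  apply cn1_fst. apply cn1_snd.
Qed.
Lemma absbC3_inner : forall f, absbC3 f -> absbC2 (fun a b => csum (f a b)).
Proof.
  intros f [A1 A2]. split.
  - replace (fun a b => fst (csum (f a b))) with (fun a b => sm (fun c => fst (f a b c))).
    apply (absb3_inner (fun a b c => fst (f a b c))); auto.
    apply functional_extensionality; intro; apply functional_extensionality; intro; rewrite csum_eq; auto.
  - replace (fun a b => snd (csum (f a b))) with (fun a b => sm (fun c => snd (f a b c))).
    apply (absb3_inner (fun a b c => snd (f a b c))); auto.
    apply functional_extensionality; intro; apply functional_extensionality; intro; rewrite csum_eq; auto.
Qed.
Lemma absbC3_slice : forall f a b, absbC3 f -> absbC (f a b).
Proof.
  intros f a b [A1 A2]. split.
  apply (absb2_row (fun b c => fst (f a b c))). apply (absb3_slice (fun a b c => fst (f a b c))); auto.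
  apply (absb2_row (fun b c => snd (f a b c))). apply (absb3_slice (fun a b c => snd (f a b c))); auto.
Qed.
Lemma absbC3_rot : forall f, absbC3 f -> absbC3 (fun a b c => f b c a).
Proof. intros f [A1 A2]; split; [apply (absb3_rot (fun a b c => fst (f a b c)))|apply (absb3_rot (fun a b c => snd (f a b c)))]; auto. Qed.
Lemma S3C_rot : forall f, absbC3 f -> S3C (fun a b c => f b c a) = S3C f.
Proof. intros f [A1 A2]; unfold S3C. rewrite (S3_rot (fun a b c => fst (f a b c))), (S3_rot (fun a b c => snd (f a b c))); auto. Qed.
Lemma absbC3_add : forall f g, absbC3 f -> absbC3 g -> absbC3 (fun a b c => Cadd (f a b c) (g a b c)).
Proof. intros f g [A1 A2] [B1 B2]; split; simpl; apply absb3_plus; auto. Qed.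
Lemma absbC3_opp : forall f, absbC3 f -> absbC3 (fun a b c => Copp (f a b c)).
Proof.
  intros f [A1 A2]; split; simpl.
  replace (fun a b c => - fst (f a b c)) with (fun a b c => -1 * fst (f a b c)) by (repeat (apply functional_extensionality; intro); ring). apply absb3_scal; auto.
  replace (fun a b c => - snd (f a b c)) with (fun a b c => -1 * snd (f a b c)) by (repeat (apply functional_extensionality; intro); ring). apply absb3_scal; auto.
Qed.
Lemma S3C_add : forall f g, absbC3 f -> absbC3 g -> S3C (fun a b c => Cadd (f a b c) (g a b c)) = Cadd (S3C f) (S3C g).
Proof. intros f g [A1 A2] [B1 B2]; unfold S3C, Cadd; simpl. rewrite !S3_plus; auto. Qed.
Lemma S3C_opp : forall f, absbC3 f -> S3C (fun a b c => Copp (f a b c)) = Copp (S3C f).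
Proof.
  intros f [A1 A2]; unfold S3C, Copp; simpl.
  replace (fun a b c => - fst (f a b c)) with (fun a b c => -1 * fst (f a b c)) by (repeat (apply functional_extensionality; intro); ring).
  replace (fun a b c => - snd (f a b c)) with (fun a b c => -1 * snd (f a b c)) by (repeat (apply functional_extensionality; intro); ring).
  rewrite !S3_scal; auto. f_equal; ring.
Qed.
Lemma S3C_zero : S3C (fun _ _ _ => C0) = C0.
Proof. unfold S3C; simpl. rewrite S3_zero. reflexivity. Qed.

Lemma sqnn : forall x, 0 <= x * x.
Proof. intro x; pose proof (Rle_0_sqr x); unfold Rsqr in *; lra. Qed.

Lemma quad : forall a b c, 0 <= a -> (forall t, 0 <= a * (t*t) + 2 * b * t + c) -> b * b <= a * c.
Proof.
  intros a b c Ha H. destruct (Req_dec a 0) as [->|Ha0].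
  - destruct (Req_dec b 0) as [->|Hb]. lra.
    specialize (H (- (c + 1) / (2 * b))).
    replace (0 * (- (c + 1) / (2 * b) * (- (c + 1) / (2 * b))) + 2 * b * (- (c + 1) / (2 * b)) + c) with (-1) in H by (field; auto). lra.
  - specialize (H (- b / a)).
    replace (a * (- b / a * (- b / a)) + 2 * b * (- b / a) + c) with (c - b * b / a) in H by (field; auto).
    assert (0 < a) by lra.
    assert (b * b / a <= c) by lra.
    apply (Rmult_le_compat_l a) in H1; [|lra]. replace (a * (b * b / a)) with (b*b) in H1 by (field; lra). lra.
Qed.

Lemma CS1 : forall N x y, zs N (fun i => x i * y i) * zs N (fun i => x i * y i)
  <= zs N (fun i => x i * x i) * zs N (fun i => y i * y i).
Proof.
  intros N x y. apply quad. apply zs_nonneg; intro; apply sqnn.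
  intro t. replace (zs N (fun i => x i * x i) * (t * t) + 2 * zs N (fun i => x i * y i) * t + zs N (fun i => y i * y i))
    with (zs N (fun i => (t * x i + y i) * (t * x i + y i))).
  apply zs_nonneg; intro k; cbv beta; pose proof (Rle_0_sqr (t * x k + y k)); unfold Rsqr in *; lra.
  replace (fun i => (t * x i + y i) * (t * x i + y i)) with (fun i => (t*t) * (x i * x i) + ((2*t) * (x i * y i) + y i * y i))
    by (apply functional_extensionality; intro; ring).
  rewrite zs_plus, zs_plus, zs_scal, zs_scal. ring.
Qed.

Lemma box_plus : forall N f g, box N (fun n k => f n k + g n k) = box N f + box N g.
Proof. intros. unfold box. rewrite <- zs_plus; apply zs_ext; intro a. rewrite <- zs_plus; reflexivity. Qed.
Lemma box_scal : forall N c f, box N (fun n k => c * f n k) = c * box N f.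
Proof. intros. unfold box. rewrite <- zs_scal; apply zs_ext; intro a. rewrite <- zs_scal; reflexivity. Qed.
Lemma box_le : forall N f g, (forall n k, f n k <= g n k) -> box N f <= box N g.
Proof. intros; unfold box; apply zs_le; intro; apply zs_le; intro; auto. Qed.

Lemma B1 : forall N (p q : Z -> Z -> R) t, 0 < t ->
  box N (fun n k => p n k * q k n) <= (t * box N (fun n k => p n k * p n k) + / t * box N (fun n k => q n k * q n k)) / 2.
Proof.
  intros N p q t Ht. rewrite <- (box_swap N (fun n k => q n k * q n k)).
  rewrite <- !box_scal. replace ((box N (fun n k => t * (p n k * p n k)) + box N (fun k n => / t * (q n k * q n k))) / 2)
    with (box N (fun n k => (t * (p n k * p n k) + / t * (q k n * q k n)) / 2)).
  - apply box_le. intros n k. assert (0 <= (t * p n k - q k n) * (t * p n k - q k n) / t).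
    { apply Rmult_le_pos. apply sqnn. left; apply Rinv_0_lt_compat; auto. }
    replace ((t * p n k - q k n) * (t * p n k - q k n) / t) with (t * (p n k * p n k) + / t * (q k n * q k n) - 2 * (p n k * q k n)) in H.
    2:{ field. lra. }
    lra.
  - replace (fun n k => (t * (p n k * p n k) + / t * (q k n * q k n)) / 2) with
      (fun n k => / 2 * (t * (p n k * p n k) + / t * (q k n * q k n))) by (repeat (apply functional_extensionality; intro); unfold Rdiv; ring).
    rewrite box_scal, box_plus. unfold Rdiv; ring.
Qed.

Lemma box3_rot2 : forall N g, box3 N (fun a b c => g c a b) = box3 N g.
Proof.
  intros N g. unfold box3, box.
  erewrite zs_ext. 2:{ intro a. rewrite zs_swap. reflexivity. }
  rewrite zs_swap. reflexivity.
Qed.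

Lemma B2 : forall N (p q r : Z -> Z -> R), (forall n k, 0 <= p n k) -> (forall n k, 0 <= q n k) -> (forall n k, 0 <= r n k) ->
  box3 N (fun a b c => p a b * q b c * r c a) <=
  (box N (fun n k => q n k * q n k) + box N (fun n k => p n k * p n k) * box N (fun n k => r n k * r n k)) / 2.
Proof.
  intros N p q r Hp Hq Hr.
  rewrite <- (box3_rot2 N (fun a b c => p a b * q b c * r c a)).
  unfold box3. unfold box at 1.
  set (v := fun b c => zs N (fun a => r c a * p a b)).
  assert (E : forall b c, zs N (fun a => p a b * q b c * r c a) = q b c * v b c).
  { intros; unfold v; rewrite <- zs_scal; apply zs_ext; intro; ring. }
  erewrite zs_ext. 2:{ intro b. apply zs_ext. intro c. apply E. }
  assert (V : forall b c, v b c * v b c <= zs N (fun a => r c a * r c a) * zs N (fun a => p a b * p a b)).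
  { intros; unfold v; apply CS1. }
  eapply Rle_trans.
  { apply zs_le; intro b; apply zs_le; intro c.
    assert (q b c * v b c <= (q b c * q b c + zs N (fun a => r c a * r c a) * zs N (fun a => p a b * p a b)) / 2).
    { pose proof (V b c). pose proof (sqnn (q b c - v b c)). lra. }
    exact H. }
  replace (fun b => zs N (fun c => (q b c * q b c + zs N (fun a => r c a * r c a) * zs N (fun a => p a b * p a b)) / 2))
    with (fun b => / 2 * (zs N (fun c => q b c * q b c) + zs N (fun a => p a b * p a b) * zs N (fun c => zs N (fun a => r c a * r c a)))).
  2:{ apply functional_extensionality; intro b.
      transitivity (zs N (fun c => / 2 * (q b c * q b c) + (/ 2 * zs N (fun a => p a b * p a b)) * zs N (fun a => r c a * r c a))).
      rewrite zs_plus, !zs_scal. ring.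
      apply zs_ext; intro c. field. }
  rewrite zs_scal, zs_plus.
  replace (fun b => zs N (fun a => p a b * p a b) * zs N (fun c => zs N (fun a => r c a * r c a)))
    with (fun b => zs N (fun c => zs N (fun a => r c a * r c a)) * zs N (fun a => p a b * p a b))
    by (apply functional_extensionality; intro; ring).
  rewrite zs_scal. rewrite zs_swap.
  unfold box. rewrite <- (zs_swap N N (fun n k => q n k * q n k)), <- (zs_swap N N (fun a k => p a k * p a k)). right; unfold Rdiv; ring.
Qed.

Definition delta (a b : Z) : R := if Z.eq_dec a b then 1 else 0.

Lemma zs_delta : forall N b g, (Z.abs b <= Z.of_nat N)%Z -> zs N (fun c => delta b c * g c) = g b.
Proof.
  intros N b g H. rewrite (zs_single N _ b).
  - destruct (Z_le_dec _ _); [|lia]. unfold delta. destruct (Z.eq_dec b b); [ring|congruence].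
  - intros k Hk. unfold delta. destruct (Z.eq_dec b k); [congruence|ring].
Qed.

Definition hC (A : mat) n k := cn1 (commD A n k).

Lemma hC_eq : forall A n k, hC A n k = Rabs (IZR (n - k)) * cn1 (A n k).
Proof. intros; unfold hC, commD; apply cn1_scal. Qed.
Lemma hC_pos : forall A n k, 0 <= hC A n k.
Proof. intros; apply cn1_pos. Qed.
Lemma hC_diag : forall A n, hC A n n = 0.
Proof. intros; rewrite hC_eq. replace (n - n)%Z with 0%Z by lia. rewrite Rabs_R0; ring. Qed.
Lemma abs_IZR_ge1 : forall z, z <> 0%Z -> 1 <= Rabs (IZR z).
Proof. intros z H. rewrite Rabs_Zabs. apply IZR_le. lia. Qed.
Lemma cn1_le_hC : forall A n k, n <> k -> cn1 (A n k) <= hC A n k.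
Proof.
  intros A n k H. rewrite hC_eq. pose proof (abs_IZR_ge1 (n - k) ltac:(lia)). pose proof (cn1_pos (A n k)). nra.
Qed.
Lemma cn1_sq : forall z, cn1 z * cn1 z <= 2 * Cnorm2 z.
Proof.
  intros [a b]; unfold cn1, Cnorm2; simpl.
  assert (a*a = Rabs a * Rabs a) by (rewrite <- Rabs_mult; rewrite Rabs_pos_eq; [auto|apply sqnn]).
  assert (b*b = Rabs b * Rabs b) by (rewrite <- Rabs_mult; rewrite Rabs_pos_eq; [auto|apply sqnn]).
  pose proof (sqnn (Rabs a - Rabs b)). nra.
Qed.
Lemma Cnorm2_pos : forall z, 0 <= Cnorm2 z.
Proof. intros [a b]; unfold Cnorm2; simpl. pose proof (sqnn a); pose proof (sqnn b); lra. Qed.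

Lemma hs_partial_box : forall A N, hs_partial A N = box N (fun n k => Cnorm2 (A n k)).
Proof.
  intros; unfold hs_partial, box. rewrite zsum_range_zs. apply zs_ext; intro; apply zsum_range_zs.
Qed.

Lemma hs_bound : forall A, hilbert_schmidt (commD A) ->
  exists H, 0 <= H /\ forall N, box N (fun n k => hC A n k * hC A n k) <= H.
Proof.
  intros A [M HM]. exists (2 * Rabs M). split. pose proof (Rabs_pos M); lra.
  intro N. eapply Rle_trans. apply box_le. intros n k. apply cn1_sq.
  rewrite box_scal. rewrite <- hs_partial_box. specialize (HM N). pose proof (Rle_abs M). lra.
Qed.

Definition evec (k : Z) : Z -> Cx := fun n => if Z.eq_dec n k then (1, 0) else C0.

Lemma diag_bound : forall A, bounded_op A -> exists D, 0 <= D /\ forall k, cn1 (A k k) <= D.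
Proof.
  intros A [M HM]. exists (1 + 2 * Rabs M). split. pose proof (Rabs_pos M); lra.
  intro k. set (N := Z.to_nat (Z.abs k)). specialize (HM N N (evec k)).
  rewrite !zsum_range_zs in HM.
  assert (E1 : forall m, csum_range N (fun n => Cmul (A m n) (evec k n)) = A m k).
  { intro m. unfold csum_range. rewrite !zsum_range_zs.
    rewrite (zs_single N _ k), (zs_single N (fun k0 => snd (Cmul (A m k0) (evec k k0))) k).
    - destruct (Z_le_dec _ _); [|lia]. unfold evec, Cmul. destruct (Z.eq_dec k k); [|congruence]. simpl.
      destruct (A m k); simpl; f_equal; ring.
    - intros j Hj; unfold evec, Cmul; destruct (Z.eq_dec j k); [congruence|]; simpl; ring.
    - intros j Hj; unfold evec, Cmul; destruct (Z.eq_dec j k); [congruence|]; simpl; ring. }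
  assert (E2 : zs N (fun n => Cnorm2 (evec k n)) = 1).
  { rewrite (zs_single N _ k). destruct (Z_le_dec _ _); [|lia]. unfold evec; destruct (Z.eq_dec k k); [|congruence]. unfold Cnorm2; simpl; ring.
    intros j Hj; unfold evec; destruct (Z.eq_dec j k); [congruence|]. unfold Cnorm2, C0; simpl; ring. }
  rewrite E2 in HM.
  assert (T : Cnorm2 (A k k) <= M).
  { eapply Rle_trans; [|rewrite Rmult_1_r in HM; exact HM].
    rewrite <- (E1 k). apply (zs_term N (fun m => Cnorm2 (csum_range N (fun n => Cmul (A m n) (evec k n))))).
    intro; apply Cnorm2_pos. lia. }
  pose proof (cn1_sq (A k k)). pose proof (cn1_pos (A k k)). pose proof (Rle_abs M).
  destruct (Rle_dec (cn1 (A k k)) 1); nra.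
Qed.

Lemma entry_bound : forall A D, (forall k, cn1 (A k k) <= D) -> forall n k, cn1 (A n k) <= delta n k * D + hC A n k.
Proof.
  intros A D HD n k. unfold delta. destruct (Z.eq_dec n k) as [<-|Hn].
  - pose proof (hC_pos A n n). specialize (HD n). lra.
  - pose proof (cn1_le_hC A n k Hn). lra.
Qed.

Definition FF (X Y : mat) n k := Cmul (X n k) (commD Y k n).

Lemma omega_eq : forall X Y, omega X Y = csum (fun n => csum (fun k => FF X Y n k)).
Proof. reflexivity. Qed.

Lemma FF_bound : forall X Y n k, cn1 (FF X Y n k) <= hC X n k * hC Y k n.
Proof.
  intros. unfold FF. eapply Rle_trans. apply cn1_mul. fold (hC Y k n).
  destruct (Z.eq_dec n k) as [<-|Hn].
  - rewrite !hC_diag. lra.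
  - apply Rmult_le_compat_r. apply hC_pos. apply cn1_le_hC; auto.
Qed.

Lemma FF_absb : forall X Y HX HY, (forall N, box N (fun n k => hC X n k * hC X n k) <= HX) ->
  (forall N, box N (fun n k => hC Y n k * hC Y n k) <= HY) -> absbC2 (FF X Y).
Proof.
  intros X Y HX HY H1 H2. apply (absbC2_bound _ (fun n k => hC X n k * hC Y k n) ((HX + HY)/2)).
  apply FF_bound. intro N. eapply Rle_trans. apply (B1 N (hC X) (hC Y) 1); lra.
  specialize (H1 N); specialize (H2 N). rewrite Rinv_1. lra.
Qed.

Lemma cn1_csum_le : forall f g M, absbC f -> (forall k, cn1 (f k) <= g k) -> (forall k, 0 <= g k) ->
  (forall N, zs N g <= M) -> cn1 (csum f) <= sm g.
Proof.
  intros f g M [A1 A2] H Hg HM. rewrite csum_eq. unfold cn1; simpl.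
  eapply Rle_trans. apply Rplus_le_compat; apply sm_abs; eauto.
  rewrite <- sm_plus by (apply absb_abs; auto).
  eapply Rle_cv_lim; [| apply absb_cv; apply absb_plus; apply absb_abs; auto | apply (nonneg_cv _ M); auto].
  intro N. apply zs_le. intro k. apply H.
Qed.

Lemma cn1_csum2_le : forall F g M, absbC2 F -> (forall n k, cn1 (F n k) <= g n k) -> (forall n k, 0 <= g n k) ->
  (forall N, box N g <= M) -> cn1 (csum (fun n => csum (F n))) <= M.
Proof.
  intros F g M HF H Hg HM.
  destruct (fub_nn g M Hg HM) as [Z1 [Z2 Z3]].
  assert (Hr : forall n, cn1 (csum (F n)) <= sm (g n)).
  { intro n. apply (cn1_csum_le _ _ M). apply absbC2_row; auto. auto. auto.
    intro N. eapply Rle_trans; [|apply (row_bound g M n N Hg HM)]. apply Rle_refl. }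
  eapply Rle_trans. apply (cn1_csum_le _ (fun n => sm (g n)) M). apply absbC2_col; auto. auto.
  intro n. eapply cv_ge. apply absb_cv. exists M. intro N. eapply Rle_trans; [|apply (row_bound g M n N Hg HM)].
  apply zs_le; intro; rewrite Rabs_pos_eq; auto; lra. intro; apply zs_nonneg; auto. auto.
  apply (nonneg_sm_le _ M). intro n. eapply cv_ge. apply absb_cv. exists M. intro N. eapply Rle_trans; [|apply (row_bound g M n N Hg HM)].
  apply zs_le; intro; rewrite Rabs_pos_eq; auto; lra. intro; apply zs_nonneg; auto. auto.
Qed.

Lemma omega_bound : forall A B a b t, 0 < t ->
  (forall N, box N (fun n k => hC A n k * hC A n k) <= a) ->
  (forall N, box N (fun n k => hC B n k * hC B n k) <= b) ->
  cn1 (omega A B) <= (t * a + / t * b) / 2.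
Proof.
  intros A B a b t Ht Ha Hb. rewrite omega_eq.
  apply (cn1_csum2_le _ (fun n k => hC A n k * hC B k n)).
  - apply (FF_absb _ _ a b); auto.
  - apply FF_bound.
  - intros; pose proof (hC_pos A n k); pose proof (hC_pos B k n); nra.
  - intro N. eapply Rle_trans. apply (B1 N _ _ t Ht). pose proof (Ha N); pose proof (Hb N).
    pose proof (Rinv_0_lt_compat t Ht).
    assert (t * box N (fun n k => hC A n k * hC A n k) <= t * a) by (apply Rmult_le_compat_l; lra).
    assert (/ t * box N (fun n k => hC B n k * hC B n k) <= / t * b) by (apply Rmult_le_compat_l; lra).
    lra.
Qed.

Lemma csum2_lin : forall F G a b, absbC2 F -> absbC2 G ->
  csum (fun n => csum (fun k => Cadd (Cscal a (F n k)) (Cscal b (G n k))))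
  = Cadd (Cscal a (csum (fun n => csum (F n)))) (Cscal b (csum (fun n => csum (G n)))).
Proof.
  intros F G a b HF HG.
  replace (fun n => csum (fun k => Cadd (Cscal a (F n k)) (Cscal b (G n k))))
    with (fun n => Cadd (Cscal a (csum (F n))) (Cscal b (csum (G n)))).
  - rewrite csum_add, !csum_scal; auto; try (apply absbC_scal); apply absbC2_col; auto.
  - apply functional_extensionality; intro n. rewrite csum_add, !csum_scal; auto; try (apply absbC_scal); apply absbC2_row; auto.
Qed.

Lemma csum2_opp : forall F, absbC2 F ->
  csum (fun n => csum (fun k => Copp (F n k))) = Copp (csum (fun n => csum (F n))).
Proof.
  intros F HF.
  replace (fun n => csum (fun k => Copp (F n k))) with (fun n => Copp (csum (F n))).
  - apply csum_opp. apply absbC2_col; auto.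
  - apply functional_extensionality; intro n. rewrite csum_opp; auto. apply absbC2_row; auto.
Qed.

Record ing_data (A : mat) := { dD : R; dH : R; dD_pos : 0 <= dD; dH_pos : 0 <= dH;
  dDb : forall k, cn1 (A k k) <= dD; dHb : forall N, box N (fun n k => hC A n k * hC A n k) <= dH }.

Lemma ing_data_of : forall A, in_g A -> exists d : ing_data A, True.
Proof.
  intros A [Hb [_ Hh]]. destruct (diag_bound A Hb) as [D [HD1 HD2]]. destruct (hs_bound A Hh) as [H [H1 H2]].
  exists (Build_ing_data A D H HD1 H1 HD2 H2). auto.
Qed.

Lemma hs_of : forall A, in_g A -> exists H, forall N, box N (fun n k => hC A n k * hC A n k) <= H.
Proof. intros A [_ [_ Hh]]. destruct (hs_bound A Hh) as [H [_ H2]]. eauto. Qed.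

Lemma omega_lin1 : forall X Y Z a b, in_g X -> in_g Y -> in_g Z ->
  omega (madd (mscal a X) (mscal b Y)) Z = Cadd (Cscal a (omega X Z)) (Cscal b (omega Y Z)).
Proof.
  intros X Y Z a b HX HY HZ. destruct (hs_of X HX) as [h1 H1]. destruct (hs_of Y HY) as [h2 H2]. destruct (hs_of Z HZ) as [h3 H3].
  rewrite !omega_eq. rewrite <- csum2_lin by (eapply FF_absb; eauto).
  f_equal. apply functional_extensionality; intro n. f_equal. apply functional_extensionality; intro k.
  unfold FF, madd, mscal, Cmul, Cadd, Cscal; simpl. f_equal; ring.
Qed.

Lemma omega_lin2 : forall X Y Z a b, in_g X -> in_g Y -> in_g Z ->
  omega X (madd (mscal a Y) (mscal b Z)) = Cadd (Cscal a (omega X Y)) (Cscal b (omega X Z)).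
Proof.
  intros X Y Z a b HX HY HZ. destruct (hs_of X HX) as [h1 H1]. destruct (hs_of Y HY) as [h2 H2]. destruct (hs_of Z HZ) as [h3 H3].
  rewrite !omega_eq. rewrite <- csum2_lin by (eapply FF_absb; eauto).
  f_equal. apply functional_extensionality; intro n. f_equal. apply functional_extensionality; intro k.
  unfold FF, commD, madd, mscal, Cmul, Cadd, Cscal; simpl. f_equal; ring.
Qed.

Lemma omega_skew : forall X Y, in_g X -> in_g Y -> omega X Y = Copp (omega Y X).
Proof.
  intros X Y HX HY. destruct (hs_of X HX) as [h1 H1]. destruct (hs_of Y HY) as [h2 H2].
  rewrite !omega_eq. rewrite (cfubini (fun n k => FF Y X n k)) by (eapply FF_absb; eauto).
  replace (fun k => csum (fun n => FF Y X n k)) with (fun k => csum (fun n => Copp (FF X Y k n))).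
  - rewrite csum2_opp by (eapply FF_absb; eauto). destruct (csum _); unfold Copp; simpl; f_equal; ring.
  - apply functional_extensionality; intro k. f_equal. apply functional_extensionality; intro n.
    unfold FF, commD, Cmul, Copp, Cscal; simpl. rewrite !minus_IZR. f_equal; ring.
Qed.

Definition TT (A B C : mat) (a b c : Z) : Cx := Cmul (Cscal (IZR (b - a)) (A a b)) (Cmul (B b c) (C c a)).

Lemma delta_sym : forall a b, delta a b = delta b a.
Proof. intros; unfold delta; destruct (Z.eq_dec a b), (Z.eq_dec b a); congruence || lra. Qed.
Lemma delta_pos : forall a b, 0 <= delta a b.
Proof. intros; unfold delta; destruct (Z.eq_dec a b); lra. Qed.

Lemma zs_delta_le : forall N b g, (forall c, 0 <= g c) -> zs N (fun c => delta b c * g c) <= g b.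
Proof.
  intros N b g Hg. rewrite (zs_single N _ b).
  - destruct (Z_le_dec _ _). unfold delta; destruct (Z.eq_dec b b); [lra|congruence]. auto.
  - intros k Hk. unfold delta. destruct (Z.eq_dec b k); [congruence|ring].
Qed.

Lemma TT_absb : forall A B C, in_g A -> in_g B -> in_g C -> absbC3 (TT A B C).
Proof.
  intros A B C HA HB HC.
  destruct (ing_data_of A HA) as [dA _]. destruct (ing_data_of B HB) as [dB _]. destruct (ing_data_of C HC) as [dC _].
  set (DB := dD B dB). set (DC := dD C dC). set (HA' := dH A dA). set (HB' := dH B dB). set (HC' := dH C dC).
  pose proof (dD_pos B dB). pose proof (dD_pos C dC). pose proof (dH_pos A dA). pose proof (dH_pos B dB). pose proof (dH_pos C dC).
  pose proof (dHb A dA) as hA. pose proof (dHb B dB) as hB. pose proof (dHb C dC) as hC'.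
  fold HA' HB' HC' in hA, hB, hC'. fold DB DC in H, H0.
  set (g1 := fun a b c => DB * (hC A a b * (delta b c * hC C c a))).
  set (g2 := fun a b c => DC * (hC A a b * hC B b c * delta c a)).
  set (g3 := fun a b c => hC A a b * hC B b c * hC C c a).
  apply (absbC3_bound _ (fun a b c => g1 a b c + g2 a b c + g3 a b c)
     (DB * ((HA' + HC') / 2) + DC * ((HA' + HB') / 2) + (HB' + HA' * HC') / 2)).
  - intros a b c. unfold TT. eapply Rle_trans. apply cn1_mul. eapply Rle_trans.
    apply Rmult_le_compat. apply cn1_pos. apply cn1_pos. rewrite cn1_scal. apply Rle_refl. apply cn1_mul.
    assert (E : Rabs (IZR (b - a)) * cn1 (A a b) = hC A a b).
    { rewrite hC_eq. rewrite <- Rabs_Ropp, <- opp_IZR. f_equal. f_equal. f_equal. lia. }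
    rewrite E.
    pose proof (entry_bound B DB (dDb B dB) b c). pose proof (entry_bound C DC (dDb C dC) c a).
    pose proof (cn1_pos (B b c)). pose proof (cn1_pos (C c a)). pose proof (hC_pos A a b).
    pose proof (hC_pos B b c). pose proof (hC_pos C c a). pose proof (delta_pos b c). pose proof (delta_pos c a).
    assert (Z0 : hC A a b * delta b c * delta c a = 0).
    { unfold delta. destruct (Z.eq_dec b c); destruct (Z.eq_dec c a); try ring. subst. rewrite hC_diag; ring. }
    eapply Rle_trans. apply Rmult_le_compat_l. auto. apply Rmult_le_compat; eauto.
    assert (EE : hC A a b * ((delta b c * DB + hC B b c) * (delta c a * DC + hC C c a)) = g1 a b c + g2 a b c + g3 a b c + DB * DC * (hC A a b * delta b c * delta c a)) by (unfold g1, g2, g3; ring).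
    rewrite Z0 in EE. lra.
  - intro N. rewrite !box3_plus.
    assert (Q1 : box3 N g1 <= DB * ((HA' + HC') / 2)).
    { unfold g1. rewrite box3_scal. apply Rmult_le_compat_l; auto.
      unfold box3. eapply Rle_trans. 2:{ eapply Rle_trans. apply (B1 N (hC A) (hC C) 1). lra. rewrite Rinv_1. pose proof (hA N); pose proof (hC' N). lra. }
      unfold box. apply zs_le; intro a. apply zs_le; intro b.
      rewrite (zs_scal N (hC A a b) (fun c => delta b c * hC C c a)). apply Rmult_le_compat_l. apply hC_pos.
      apply (zs_delta_le N b (fun c => hC C c a)). intro; apply hC_pos. }
    assert (Q2 : box3 N g2 <= DC * ((HA' + HB') / 2)).
    { unfold g2. rewrite box3_scal. apply Rmult_le_compat_l; auto.
      unfold box3. eapply Rle_trans. 2:{ eapply Rle_trans. apply (B1 N (hC A) (hC B) 1). lra. rewrite Rinv_1. pose proof (hA N); pose proof (hB N). lra. }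
      unfold box. apply zs_le; intro a. apply zs_le; intro b.
      replace (fun c => hC A a b * hC B b c * delta c a) with (fun c => delta a c * (hC A a b * hC B b c)).
      apply (zs_delta_le N a (fun c => hC A a b * hC B b c)). intro; apply Rmult_le_pos; apply hC_pos.
      apply functional_extensionality; intro c. rewrite delta_sym. ring. }
    assert (Q3 : box3 N g3 <= (HB' + HA' * HC') / 2).
    { unfold g3. eapply Rle_trans. apply B2; intros; apply hC_pos.
      pose proof (hA N); pose proof (hB N); pose proof (hC' N).
      assert (0 <= box N (fun n k => hC A n k * hC A n k)) by (unfold box; apply zs_nonneg; intro; apply zs_nonneg; intro; apply sqnn).
      assert (0 <= box N (fun n k => hC C n k * hC C n k)) by (unfold box; apply zs_nonneg; intro; apply zs_nonneg; intro; apply sqnn).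
      assert (box N (fun n k => hC A n k * hC A n k) * box N (fun n k => hC C n k * hC C n k) <= HA' * HC') by (apply Rmult_le_compat; auto).
      lra. }
    lra.
Qed.

Lemma prod_absb : forall B C k n, in_g B -> in_g C -> absbC (fun j => Cmul (B k j) (C j n)).
Proof.
  intros B C k n HB HC.
  destruct (ing_data_of B HB) as [dB _]. destruct (ing_data_of C HC) as [dC _].
  set (DB := dD B dB). set (DC := dD C dC). set (HB' := dH B dB). set (HC' := dH C dC).
  pose proof (dD_pos B dB). pose proof (dD_pos C dC). pose proof (dH_pos B dB). pose proof (dH_pos C dC).
  pose proof (dHb B dB) as hB. pose proof (dHb C dC) as hC'.
  fold HB' HC' in hB, hC'. fold DB DC in H, H0.
  apply (absbC_bound _ (fun j => delta k j * (delta j n * (DB * DC)) + delta k j * (DB * hC C j n) + delta n j * (hC B k j * DC) + hC B k j * hC C j n)).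
  - intro j. eapply Rle_trans. apply cn1_mul.
    pose proof (entry_bound B DB (dDb B dB) k j). pose proof (entry_bound C DC (dDb C dC) j n).
    pose proof (cn1_pos (B k j)). pose proof (cn1_pos (C j n)).
    pose proof (hC_pos B k j). pose proof (hC_pos C j n). pose proof (delta_pos k j). pose proof (delta_pos j n).
    eapply Rle_trans. apply Rmult_le_compat; eauto. rewrite (delta_sym n j). right; ring.
  - exists (DB * DC + DB * hC C k n + hC B k n * DC + (HB' + HC') / 2). intro N.
    rewrite !zs_plus.
    assert (S1 : zs N (fun j => delta k j * (delta j n * (DB * DC))) <= DB * DC).
    { eapply Rle_trans. apply (zs_delta_le N k (fun j => delta j n * (DB * DC))).
      intro; apply Rmult_le_pos. apply delta_pos. nra. unfold delta; destruct (Z.eq_dec k n); nra. }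
    assert (S2 : zs N (fun j => delta k j * (DB * hC C j n)) <= DB * hC C k n).
    { apply (zs_delta_le N k (fun j => DB * hC C j n)). intro; apply Rmult_le_pos; auto; apply hC_pos. }
    assert (S3' : zs N (fun j => delta n j * (hC B k j * DC)) <= hC B k n * DC).
    { apply (zs_delta_le N n (fun j => hC B k j * DC)). intro; apply Rmult_le_pos; auto; apply hC_pos. }
    assert (S4 : zs N (fun j => hC B k j * hC C j n) <= (HB' + HC') / 2).
    { eapply Rle_trans. apply zs_le. intro j. assert (hC B k j * hC C j n <= (hC B k j * hC B k j + hC C j n * hC C j n) / 2).
      pose proof (sqnn (hC B k j - hC C j n)). lra. exact H3.
      replace (fun j => (hC B k j * hC B k j + hC C j n * hC C j n) / 2) with
        (fun j => / 2 * (hC B k j * hC B k j + hC C j n * hC C j n)) by (apply functional_extensionality; intro; unfold Rdiv; ring).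
      rewrite zs_scal, zs_plus.
      pose proof (row_bound (fun a b => hC B a b * hC B a b) HB' k N (fun a b => sqnn _) hB).
      pose proof (row_bound (fun b a => hC C a b * hC C a b) HC' n N (fun a b => sqnn _) (fun N => eq_ind _ (fun x => x <= HC') (hC' N) _ (eq_sym (box_swap N _)))).
      simpl in *. lra. }
    lra.
Qed.

Lemma Cx_id1 : forall x r U V, Cmul x (Cscal r (Csub U V)) = Csub (Cmul (Cscal r x) U) (Cmul (Cscal r x) V).
Proof. intros [a b] r [c d] [e f]; unfold Cmul, Cscal, Csub, Cadd, Copp; simpl; f_equal; ring. Qed.

Lemma omega_bracket : forall X Y Z, in_g X -> in_g Y -> in_g Z ->
  omega X (bracket Y Z) = Csub (S3C (TT X Y Z)) (S3C (TT X Z Y)).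
Proof.
  intros X Y Z HX HY HZ. rewrite omega_eq.
  pose proof (TT_absb X Y Z HX HY HZ) as T1. pose proof (TT_absb X Z Y HX HZ HY) as T2.
  pose proof (absbC3_inner _ T1) as I1. pose proof (absbC3_inner _ T2) as I2.
  assert (P : forall n k, FF X (bracket Y Z) n k = Csub (csum (fun j => TT X Y Z n k j)) (csum (fun j => TT X Z Y n k j))).
  { intros n k. unfold FF, commD, bracket, msub, mmul, TT.
    rewrite (csum_mul (Cscal (IZR (k - n)) (X n k)) (fun j => Cmul (Y k j) (Z j n))) by (apply prod_absb; auto).
    rewrite (csum_mul (Cscal (IZR (k - n)) (X n k)) (fun j => Cmul (Z k j) (Y j n))) by (apply prod_absb; auto).
    apply Cx_id1. }
  replace (fun n => csum (fun k => FF X (bracket Y Z) n k)) with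
    (fun n => Csub (csum (fun k => csum (fun j => TT X Y Z n k j))) (csum (fun k => csum (fun j => TT X Z Y n k j)))).
  - rewrite csum_sub. rewrite !csum3. reflexivity.
    apply (absbC2_col (fun n k => csum (fun j => TT X Y Z n k j))); auto.
    apply (absbC2_col (fun n k => csum (fun j => TT X Z Y n k j))); auto.
  - apply functional_extensionality; intro n. rewrite <- csum_sub.
    f_equal. apply functional_extensionality; intro k. symmetry; apply P.
    apply (absbC2_row (fun n k => csum (fun j => TT X Y Z n k j))); auto.
    apply (absbC2_row (fun n k => csum (fun j => TT X Z Y n k j))); auto.
Qed.

Lemma S3C_rot2 : forall f, absbC3 f -> S3C (fun a b c => f c a b) = S3C f.
Proof.
  intros f Hf. set (g := fun a b c => f c a b).
  assert (Hg : absbC3 g) by (unfold g; apply absbC3_rot; apply absbC3_rot; auto).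
  rewrite <- (S3C_rot g Hg). unfold g. reflexivity.
Qed.

Lemma cocycle : forall X Y Z, in_g X -> in_g Y -> in_g Z ->
  Cadd (Cadd (omega X (bracket Y Z)) (omega Y (bracket Z X))) (omega Z (bracket X Y)) = C0.
Proof.
  intros X Y Z HX HY HZ.
  rewrite !omega_bracket by auto.
  pose proof (TT_absb X Y Z HX HY HZ) as A1. pose proof (TT_absb X Z Y HX HZ HY) as A2.
  pose proof (TT_absb Y Z X HY HZ HX) as A3. pose proof (TT_absb Y X Z HY HX HZ) as A4.
  pose proof (TT_absb Z X Y HZ HX HY) as A5. pose proof (TT_absb Z Y X HZ HY HX) as A6.
  rewrite <- (S3C_rot (TT Y Z X)) by auto. rewrite <- (S3C_rot2 (TT Z X Y)) by auto.
  rewrite <- (S3C_rot2 (TT Y X Z)) by auto. rewrite <- (S3C_rot (TT Z Y X)) by auto.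
  pose proof (absbC3_rot _ A3) as B3. pose proof (absbC3_rot _ (absbC3_rot _ A5)) as B5.
  pose proof (absbC3_rot _ (absbC3_rot _ A4)) as B4. pose proof (absbC3_rot _ A6) as B6.
  unfold Csub. rewrite <- !S3C_opp by auto. rewrite <- !S3C_add by (repeat apply absbC3_add; try apply absbC3_opp; auto).
  rewrite <- S3C_zero. f_equal.
  repeat (apply functional_extensionality; intro).
  unfold TT, Cmul, Cscal, Cadd, Copp, C0; simpl. rewrite !minus_IZR. f_equal; ring.
Qed.

Definition hsb (A : mat) := exists H, forall N, box N (fun n k => hC A n k * hC A n k) <= H.

Lemma hC_sub : forall X Y n k, hC (msub X Y) n k <= hC X n k + hC Y n k.
Proof.
  intros. unfold hC. replace (commD (msub X Y) n k) with (Csub (commD X n k) (commD Y n k)).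
  apply cn1_sub. unfold commD, msub, Csub, Cadd, Copp, Cscal; simpl; f_equal; ring.
Qed.

Lemma hsb_sub : forall X Y, hsb X -> hsb Y -> hsb (msub X Y).
Proof.
  intros X Y [h1 H1] [h2 H2]. exists (2 * h1 + 2 * h2). intro N.
  eapply Rle_trans. apply (box_le N _ (fun n k => 2 * (hC X n k * hC X n k) + 2 * (hC Y n k * hC Y n k))).
  - intros n k. pose proof (hC_sub X Y n k). pose proof (hC_pos (msub X Y) n k).
    pose proof (sqnn (hC X n k - hC Y n k)). pose proof (hC_pos X n k); pose proof (hC_pos Y n k).
    assert (hC (msub X Y) n k * hC (msub X Y) n k <= (hC X n k + hC Y n k) * (hC X n k + hC Y n k)) by (apply Rmult_le_compat; auto).
    lra.
  - rewrite box_plus, !box_scal. specialize (H1 N); specialize (H2 N). lra.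
Qed.

Lemma csum2_sub : forall F G, absbC2 F -> absbC2 G ->
  csum (fun n => csum (fun k => Csub (F n k) (G n k))) = Csub (csum (fun n => csum (F n))) (csum (fun n => csum (G n))).
Proof.
  intros F G HF HG.
  replace (fun n => csum (fun k => Csub (F n k) (G n k))) with (fun n => csum (fun k => Cadd (Cscal 1 (F n k)) (Cscal (-1) (G n k)))).
  rewrite csum2_lin by auto. destruct (csum (fun n => csum (F n))), (csum (fun n => csum (G n))).
  unfold Csub, Cadd, Cscal, Copp; simpl; f_equal; ring.
  apply functional_extensionality; intro n; f_equal; apply functional_extensionality; intro k.
  destruct (F n k), (G n k); unfold Csub, Cadd, Cscal, Copp; simpl; f_equal; ring.
Qed.

Lemma omega_sub1 : forall X X0 Y, hsb X -> hsb X0 -> hsb Y ->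
  omega (msub X X0) Y = Csub (omega X Y) (omega X0 Y).
Proof.
  intros X X0 Y [h1 H1] [h2 H2] [h3 H3]. rewrite !omega_eq. rewrite <- csum2_sub by (eapply FF_absb; eauto).
  f_equal; apply functional_extensionality; intro n; f_equal; apply functional_extensionality; intro k.
  unfold FF, msub. destruct (X n k), (X0 n k), (commD Y k n); unfold Csub, Cadd, Copp, Cmul; simpl; f_equal; ring.
Qed.

Lemma omega_sub2 : forall X Y Y0, hsb X -> hsb Y -> hsb Y0 ->
  omega X (msub Y Y0) = Csub (omega X Y) (omega X Y0).
Proof.
  intros X Y Y0 [h1 H1] [h2 H2] [h3 H3]. rewrite !omega_eq. rewrite <- csum2_sub by (eapply FF_absb; eauto).
  f_equal; apply functional_extensionality; intro n; f_equal; apply functional_extensionality; intro k.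
  unfold FF, msub, commD. destruct (X n k), (Y k n), (Y0 k n); unfold Csub, Cadd, Copp, Cmul, Cscal; simpl; f_equal; ring.
Qed.

Lemma lub_spec : forall S, Raxioms.bound S -> (exists x, S x) -> is_lub S (Defs.lub S).
Proof.
  intros S Hb He. destruct (completeness S Hb He) as [m Hm]. unfold Defs.lub.
  apply (epsilon_spec (inhabits 0) (fun l => is_lub S l)). exists m; auto.
Qed.

Lemma Cnorm2_sub : forall z w, Cnorm2 (Csub z w) <= 2 * Cnorm2 z + 2 * Cnorm2 w.
Proof.
  intros [a b] [c d]; unfold Cnorm2, Csub, Cadd, Copp; simpl.
  pose proof (sqnn (a + c)); pose proof (sqnn (b + d)). nra.
Qed.

Lemma gnorm_small : forall X X0 d, in_g X -> in_g X0 -> 0 < d -> gnorm (msub X X0) < d ->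
  forall N, box N (fun n k => hC (msub X X0) n k * hC (msub X X0) n k) <= 2 * (d * d).
Proof.
  intros X X0 d HX HX0 Hd Hg N. set (E := msub X X0) in *.
  destruct (ing_data_of X HX) as [dX _]. destruct (ing_data_of X0 HX0) as [dX0 _].
  assert (Hl : 0 <= Defs.lub (fun r => exists n, r = Cabs (E n n))).
  { assert (L := lub_spec (fun r => exists n, r = Cabs (E n n))). destruct L as [L1 L2].
    - exists (dD X dX + dD X0 dX0). intros r [n ->]. eapply Rle_trans. apply Cabs_cn1.
      unfold E, msub. eapply Rle_trans. apply cn1_sub. pose proof (dDb X dX n); pose proof (dDb X0 dX0 n). lra.
    - exists (Cabs (E 0%Z 0%Z)). exists 0%Z; auto.
    - eapply Rle_trans. 2: apply (L1 (Cabs (E 0%Z 0%Z))). apply sqrt_pos. exists 0%Z; auto. }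
  destruct HX as [_ [_ [M1 HM1]]]. destruct HX0 as [_ [_ [M2 HM2]]].
  assert (Hb : forall N, hs_partial (commD E) N <= 2 * M1 + 2 * M2).
  { intro N'. rewrite !hs_partial_box. specialize (HM1 N'); specialize (HM2 N'). rewrite hs_partial_box in HM1, HM2.
    eapply Rle_trans. apply (box_le N' _ (fun n k => 2 * Cnorm2 (commD X n k) + 2 * Cnorm2 (commD X0 n k))).
    - intros n k. replace (commD E n k) with (Csub (commD X n k) (commD X0 n k)). apply Cnorm2_sub.
      unfold E, commD, msub, Csub, Cadd, Copp, Cscal; simpl; f_equal; ring.
    - rewrite box_plus, !box_scal. lra. }
  destruct (cv_mono (hs_partial (commD E)) (2 * M1 + 2 * M2)) as [L HL]; auto.
  { intro N'. rewrite !hs_partial_box. apply box_mono; [intros; apply Cnorm2_pos|lia]. }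
  unfold gnorm in Hg. rewrite (lim_spec _ _ HL) in Hg.
  assert (HL0 : 0 <= L). { eapply cv_ge. exact HL. intro; rewrite hs_partial_box; unfold box; apply zs_nonneg; intro; apply zs_nonneg; intro; apply Cnorm2_pos. }
  assert (Hs : sqrt L < d) by lra.
  assert (HLd : L < d * d). { rewrite <- (sqrt_sqrt L HL0). pose proof (sqrt_pos L). nra. }
  assert (HN : hs_partial (commD E) N <= L).
  { apply (growing_ineq (hs_partial (commD E))); auto. intro N'. rewrite !hs_partial_box. apply box_mono; [intros; apply Cnorm2_pos|lia]. }
  eapply Rle_trans. apply (box_le N _ (fun n k => 2 * Cnorm2 (commD E n k))). intros; apply cn1_sq.
  rewrite box_scal, <- hs_partial_box. lra.
Qed.

Lemma hsb_of : forall A, in_g A -> hsb A.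
Proof. intros A HA. destruct (hs_of A HA) as [H HH]; exists H; auto. Qed.

Lemma hsb_nonneg : forall A H, (forall N, box N (fun n k => hC A n k * hC A n k) <= H) -> 0 <= H.
Proof. intros A H HH. eapply Rle_trans; [|apply (HH 0%nat)]. unfold box; apply zs_nonneg; intro; apply zs_nonneg; intro; apply sqnn. Qed.

Lemma omega_cont : forall X0 Y0 : mat, in_g X0 -> in_g Y0 -> forall eps : R, 0 < eps ->
     exists delta : R, 0 < delta /\
       forall X Y : mat, in_g X -> in_g Y ->
         gnorm (msub X X0) < delta -> gnorm (msub Y Y0) < delta ->
         Cabs (Csub (omega X Y) (omega X0 Y0)) < eps.
Proof.
  intros X0 Y0 HX0 HY0 eps Heps.
  destruct (hs_of X0 HX0) as [h1 H1]. destruct (hs_of Y0 HY0) as [h2 H2].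
  pose proof (hsb_nonneg _ _ H1). pose proof (hsb_nonneg _ _ H2).
  set (d := Rmin 1 (eps / (5 + h1 + h2))).
  assert (Hd0 : 0 < d). { unfold d. apply Rmin_glb_lt. lra. apply Rdiv_lt_0_compat; lra. }
  assert (Hd1 : d <= 1) by apply Rmin_l.
  assert (Hd2 : d * (5 + h1 + h2) <= eps).
  { assert (d <= eps / (5 + h1 + h2)) by apply Rmin_r. apply Rmult_le_compat_r with (r := 5 + h1 + h2) in H3; [|lra].
    unfold Rdiv in H3. rewrite Rmult_assoc, Rinv_l, Rmult_1_r in H3; lra. }
  exists d. split; auto.
  intros X Y HX HY GX GY.
  pose proof (gnorm_small X X0 d HX HX0 Hd0 GX) as EX. pose proof (gnorm_small Y Y0 d HY HY0 Hd0 GY) as EY.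
  assert (hX := hsb_of X HX). assert (hX0 := hsb_of X0 HX0). assert (hY := hsb_of Y HY). assert (hY0 := hsb_of Y0 HY0).
  assert (Eq : Csub (omega X Y) (omega X0 Y0) =
    Cadd (Cadd (omega (msub X X0) (msub Y Y0)) (omega (msub X X0) Y0)) (omega X0 (msub Y Y0))).
  { rewrite !omega_sub1, !omega_sub2; auto; try apply hsb_sub; auto.
    destruct (omega X Y), (omega X Y0), (omega X0 Y), (omega X0 Y0); unfold Csub, Cadd, Copp; simpl; f_equal; ring. }
  rewrite Eq. eapply Rle_lt_trans. apply Cabs_cn1.
  eapply Rle_lt_trans. apply cn1_add. eapply Rle_lt_trans. apply Rplus_le_compat_r. apply cn1_add.
  pose proof (omega_bound (msub X X0) (msub Y Y0) _ _ 1 Rlt_0_1 EX EY) as B1'.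
  pose proof (omega_bound (msub X X0) Y0 _ _ (/ d) (Rinv_0_lt_compat d Hd0) EX H2) as B2'.
  pose proof (omega_bound X0 (msub Y Y0) _ _ d Hd0 H1 EY) as B3'.
  rewrite Rinv_inv in B2'. rewrite Rinv_1 in B1'.
  replace (/ d * (2 * (d * d))) with (2 * d) in B2' by (field; lra).
  replace (/ d * (2 * (d * d))) with (2 * d) in B3' by (field; lra).
  assert (d * d <= d) by nra.
  assert (d * h2 <= h2 * d) by lra. nra.
Qed.

Definition tp (r1 c1 : Z) (z1 : Cx) (r2 c2 : Z) (z2 : Cx) : mat :=
  fun m k => if Z.eq_dec m r1 then (if Z.eq_dec k c1 then z1 else C0)
             else if Z.eq_dec m r2 then (if Z.eq_dec k c2 then z2 else C0) else C0.

Lemma zs_supp1_le : forall N h c, (forall k, 0 <= h k) -> (forall k, k <> c -> h k = 0) -> zs N h <= h c.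
Proof. intros. rewrite (zs_single N h c); auto. destruct (Z_le_dec _ _); [lra|auto]. Qed.

Lemma zs_supp2 : forall N f p q, p <> q -> (forall k, k <> p -> k <> q -> f k = 0) ->
  zs N f = (if Z_le_dec (Z.abs p) (Z.of_nat N) then f p else 0) + (if Z_le_dec (Z.abs q) (Z.of_nat N) then f q else 0).
Proof.
  intros N f p q Hpq H.
  rewrite (zs_ext N f (fun k => (if Z.eq_dec k p then f k else 0) + (if Z.eq_dec k q then f k else 0))).
  - rewrite zs_plus. rewrite (zs_single N _ p), (zs_single N (fun k => if Z.eq_dec k q then f k else 0) q).
    + destruct (Z.eq_dec p p), (Z.eq_dec q q); try congruence; try reflexivity.
    + intros k Hk; destruct (Z.eq_dec k q); congruence.
    + intros k Hk; destruct (Z.eq_dec k p); congruence.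
  - intro k. destruct (Z.eq_dec k p), (Z.eq_dec k q); subst; try congruence; try ring. rewrite H; auto; ring.
Qed.

Lemma zs_supp2_le : forall N f p q, p <> q -> (forall k, 0 <= f k) -> (forall k, k <> p -> k <> q -> f k = 0) ->
  zs N f <= f p + f q.
Proof.
  intros. rewrite (zs_supp2 N f p q); auto. pose proof (H0 p); pose proof (H0 q).
  destruct (Z_le_dec _ _), (Z_le_dec _ _); lra.
Qed.

Lemma csum_supp2 : forall f p q, p <> q -> (forall k, k <> p -> k <> q -> f k = C0) -> csum f = Cadd (f p) (f q).
Proof.
  intros f p q Hpq H. rewrite csum_eq. unfold Cadd.
  f_equal; apply sm_eq; intros e He; exists (Z.to_nat (Z.max (Z.abs p) (Z.abs q))); intros n Hn;
  rewrite (zs_supp2 n _ p q Hpq);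
  try (intros k H1 H2; rewrite H; auto);
  destruct (Z_le_dec _ _); try lia; destruct (Z_le_dec _ _); try lia;
  unfold Rdist; rewrite Rminus_diag, Rabs_R0; auto.
Qed.

Lemma Cnorm2_mul : forall z w, Cnorm2 (Cmul z w) = Cnorm2 z * Cnorm2 w.
Proof. intros [a b] [c d]; unfold Cnorm2, Cmul; simpl; ring. Qed.

Lemma tp_bounded : forall r1 c1 z1 r2 c2 z2, r1 <> r2 -> c1 <> c2 -> bounded_op (tp r1 c1 z1 r2 c2 z2).
Proof.
  intros r1 c1 z1 r2 c2 z2 Hr Hc. exists (Cnorm2 z1 + Cnorm2 z2). intros N K v.
  rewrite !zsum_range_zs.
  set (w := fun c z => if Z_le_dec (Z.abs c) (Z.of_nat N) then Cmul z (v c) else C0).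
  assert (Row : forall m, csum_range N (fun n => Cmul (tp r1 c1 z1 r2 c2 z2 m n) (v n)) =
     if Z.eq_dec m r1 then w c1 z1 else if Z.eq_dec m r2 then w c2 z2 else C0).
  { intro m. unfold csum_range. rewrite !zsum_range_zs. unfold tp, w.
    destruct (Z.eq_dec m r1); [|destruct (Z.eq_dec m r2)].
    - rewrite (zs_single N _ c1), (zs_single N (fun k => snd (Cmul (if Z.eq_dec k c1 then z1 else C0) (v k))) c1).
      destruct (Z.eq_dec c1 c1); [|congruence]. destruct (Z_le_dec _ _); auto.
      all: intros k Hk; destruct (Z.eq_dec k c1); [congruence|]; unfold Cmul, C0; simpl; ring.
    - rewrite (zs_single N _ c2), (zs_single N (fun k => snd (Cmul (if Z.eq_dec k c2 then z2 else C0) (v k))) c2).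
      destruct (Z.eq_dec c2 c2); [|congruence]. destruct (Z_le_dec _ _); auto.
      all: intros k Hk; destruct (Z.eq_dec k c2); [congruence|]; unfold Cmul, C0; simpl; ring.
    - unfold Cmul, C0; simpl. rewrite (zs_ext N _ (fun _ => 0)) by (intro; ring).
      rewrite (zs_ext N (fun k => 0 * snd (v k) + 0 * fst (v k)) (fun _ => 0)) by (intro; ring). rewrite zs_const0; auto. }
  rewrite (zs_ext K _ (fun m => Cnorm2 (if Z.eq_dec m r1 then w c1 z1 else if Z.eq_dec m r2 then w c2 z2 else C0)))
    by (intro; rewrite Row; auto).
  eapply Rle_trans. apply (zs_supp2_le K _ r1 r2 Hr). intro; apply Cnorm2_pos.
  intros k H1 H2. destruct (Z.eq_dec k r1), (Z.eq_dec k r2); try congruence. unfold Cnorm2, C0; simpl; ring.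
  destruct (Z.eq_dec r1 r1); [|congruence]. destruct (Z.eq_dec r2 r1); [congruence|]. destruct (Z.eq_dec r2 r2); [|congruence].
  unfold w. pose proof (Cnorm2_pos z1). pose proof (Cnorm2_pos z2).
  assert (L : (if Z_le_dec (Z.abs c1) (Z.of_nat N) then Cnorm2 (v c1) else 0) + (if Z_le_dec (Z.abs c2) (Z.of_nat N) then Cnorm2 (v c2) else 0)
     <= zs N (fun n => Cnorm2 (v n))).
  { set (g := fun k => if Z.eq_dec k c1 then Cnorm2 (v k) else if Z.eq_dec k c2 then Cnorm2 (v k) else 0).
    assert (HL : zs N g <= zs N (fun n => Cnorm2 (v n))).
    { apply zs_le. intro k. unfold g. destruct (Z.eq_dec k c1), (Z.eq_dec k c2); try lra; apply Cnorm2_pos. }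
    rewrite (zs_supp2 N g c1 c2 Hc) in HL.
    - unfold g in HL. destruct (Z.eq_dec c1 c1), (Z.eq_dec c2 c1), (Z.eq_dec c2 c2); try congruence; exact HL.
    - intros k H1 H2; unfold g; destruct (Z.eq_dec k c1), (Z.eq_dec k c2); congruence || auto. }
  assert (C0n : Cnorm2 C0 = 0) by (unfold Cnorm2, C0; simpl; ring).
  pose proof (Cnorm2_pos (v c1)); pose proof (Cnorm2_pos (v c2)).
  destruct (Z_le_dec (Z.abs c1) _), (Z_le_dec (Z.abs c2) _); rewrite ?Cnorm2_mul, ?C0n in *; idtac.
  all: destruct (Z.eq_dec r1 r1) as [_|]; [|congruence]; rewrite ?Cnorm2_mul, ?C0n.
  all: assert (0 <= zs N (fun n => Cnorm2 (v n))) by lra.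
  all: nra.
Qed.

Lemma tp_hs : forall r1 c1 z1 r2 c2 z2, r1 <> r2 -> hilbert_schmidt (commD (tp r1 c1 z1 r2 c2 z2)).
Proof.
  intros r1 c1 z1 r2 c2 z2 Hr. set (T := tp r1 c1 z1 r2 c2 z2).
  exists (Cnorm2 (commD T r1 c1) + Cnorm2 (commD T r2 c2)). intro N. rewrite hs_partial_box. unfold box.
  assert (Z0 : forall m n, (m <> r1 /\ m <> r2) \/ (m = r1 /\ n <> c1) \/ (m = r2 /\ n <> c2) -> Cnorm2 (commD T m n) = 0).
  { intros m n Hmn. unfold T, tp, commD, Cnorm2, Cscal.
    destruct (Z.eq_dec m r1), (Z.eq_dec m r2), (Z.eq_dec n c1), (Z.eq_dec n c2); subst; try (exfalso; lia);
    unfold C0; simpl; ring. }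
  eapply Rle_trans. apply (zs_supp2_le N _ r1 r2 Hr).
  - intro; apply zs_nonneg; intro; apply Cnorm2_pos.
  - intros k H1 H2. rewrite (zs_ext N _ (fun _ => 0)). apply zs_const0. intro n; apply Z0; auto.
  - apply Rplus_le_compat; [apply (zs_supp1_le N (fun k => Cnorm2 (commD T r1 k)) c1)|apply (zs_supp1_le N (fun k => Cnorm2 (commD T r2 k)) c2)];
      try (intro; apply Cnorm2_pos); intros k Hk; apply Z0; auto.
Qed.

Lemma tp_ing : forall r1 c1 z1 r2 c2 z2, r1 <> r2 -> c1 <> c2 -> skew_adjoint (tp r1 c1 z1 r2 c2 z2) -> in_g (tp r1 c1 z1 r2 c2 z2).
Proof. intros. split; [apply tp_bounded; auto|split; auto]. apply tp_hs; auto. Qed.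

Definition Xm p := tp 0 p (1, 0) p 0 (-1, 0).
Definition Ym p := tp 0 p (0, 1) p 0 (0, 1).
Definition Pm c p := tp 0 0 (0, c) p p (0, - c).

Ltac tpsolve := unfold tp, Copp, Cconj, C0; repeat (destruct (Z.eq_dec _ _)); subst; try (exfalso; lia); simpl; f_equal; ring.

Lemma Xm_ing : forall p, p <> 0%Z -> in_g (Xm p).
Proof. intros p Hp. apply tp_ing; auto. intros m n. unfold Xm. tpsolve. Qed.
Lemma Ym_ing : forall p, p <> 0%Z -> in_g (Ym p).
Proof. intros p Hp. apply tp_ing; auto. intros m n. unfold Ym. tpsolve. Qed.
Lemma Pm_ing : forall c p, p <> 0%Z -> in_g (Pm c p).
Proof. intros c p Hp. apply tp_ing; auto. intros m n. unfold Pm. tpsolve. Qed.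

Lemma mmul_row : forall (A B : mat) m n q, (forall k, k <> q -> A m k = C0) -> mmul A B m n = Cmul (A m q) (B q n).
Proof.
  intros A B m n q H. unfold mmul. apply (csum_single (fun k => Cmul (A m k) (B k n)) q).
  intros k Hk. rewrite H; auto. unfold Cmul, C0; simpl; f_equal; ring.
Qed.

Definition sq (p m : Z) : Z := if Z.eq_dec m 0 then p else 0.

Lemma Xm_row : forall p m k, p <> 0%Z -> k <> sq p m -> Xm p m k = C0.
Proof. intros p m k Hp Hk. unfold Xm, tp, sq in *. repeat destruct (Z.eq_dec _ _); subst; try lia; auto. Qed.
Lemma Ym_row : forall p m k, p <> 0%Z -> k <> sq p m -> Ym p m k = C0.
Proof. intros p m k Hp Hk. unfold Ym, tp, sq in *. repeat destruct (Z.eq_dec _ _); subst; try lia; auto. Qed.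

Lemma bracket_XY : forall p, p <> 0%Z -> bracket (Xm p) (Ym p) = Pm 2 p.
Proof.
  intros p Hp. apply functional_extensionality; intro m. apply functional_extensionality; intro n.
  unfold bracket, msub. rewrite (mmul_row _ _ m n (sq p m)) by (intros; apply Xm_row; auto).
  rewrite (mmul_row _ _ m n (sq p m)) by (intros; apply Ym_row; auto).
  unfold Xm, Ym, Pm, sq, Cmul, Csub, Cadd. tpsolve.
Qed.

Lemma omega_XY : forall p, p <> 0%Z -> omega (Xm p) (Ym p) = (0, 2 * IZR p).
Proof.
  intros p Hp. unfold omega, tr_c.
  rewrite (csum_supp2 _ 0 p) by (auto; intros k H1 H2; rewrite (mmul_row _ _ k k (sq p k)) by (intros; apply Xm_row; auto);
    unfold Xm, tp, sq; repeat destruct (Z.eq_dec _ _); subst; try lia; unfold Cmul, C0; simpl; f_equal; ring).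
  rewrite (mmul_row _ _ 0 0 (sq p 0)) by (intros; apply Xm_row; auto).
  rewrite (mmul_row _ _ p p (sq p p)) by (intros; apply Xm_row; auto).
  unfold Xm, Ym, sq, commD, Cmul, Cadd, Cscal. unfold tp, C0. repeat destruct (Z.eq_dec _ _); subst; try lia.
  simpl. replace (p - 0)%Z with p by lia. rewrite ?opp_IZR. apply injective_projections; simpl; ring.
Qed.

Lemma Cabs_0y : forall y, Cabs (0, y) = Rabs y.
Proof. intro y. unfold Cabs, Cnorm2; simpl. rewrite <- sqrt_Rsqr_abs. f_equal. unfold Rsqr; ring. Qed.

Lemma gnorm_Pm : forall a p, 0 <= a -> p <> 0%Z -> gnorm (Pm a p) <= a.
Proof.
  intros a p Ha Hp. unfold gnorm.
  assert (H0 : forall N, hs_partial (commD (Pm a p)) N = 0).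
  { intro N. rewrite hs_partial_box. unfold box. rewrite (zs_ext N _ (fun _ => 0)). apply zs_const0.
    intro m. rewrite (zs_ext N _ (fun _ => 0)). apply zs_const0. intro n.
    unfold Pm, tp, commD, Cscal, Cnorm2, C0. repeat destruct (Z.eq_dec _ _); subst; simpl; try (replace (p - p)%Z with 0%Z by lia); try ring. }
  replace (lim (hs_partial (commD (Pm a p)))) with 0.
  2:{ symmetry. apply lim_spec. eapply Un_cv_ext; [|apply (cv_const 0)]. intro; simpl; rewrite H0; auto. }
  rewrite sqrt_0, Rplus_0_r.
  assert (Hb : forall n, Cabs (Pm a p n n) <= a).
  { intro n. unfold Pm, tp. repeat destruct (Z.eq_dec _ _); subst; try rewrite Cabs_0y.
    all: try (rewrite Rabs_pos_eq; lra). all: try (rewrite Rabs_Ropp, Rabs_pos_eq; lra).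
    all: unfold Cabs, Cnorm2, C0; simpl; replace (0 * 0 + 0 * 0) with 0 by ring; rewrite sqrt_0; auto. }
  destruct (lub_spec (fun r => exists n, r = Cabs (Pm a p n n))) as [L1 L2].
  - exists a. intros r [n ->]. auto.
  - exists (Cabs (Pm a p 0%Z 0%Z)); exists 0%Z; auto.
  - apply L2. intros r [n ->]. auto.
Qed.

Lemma nontrivial : ~ (exists theta : mat -> Cx,
       (forall (X Y : mat) (a b : R), in_g X -> in_g Y ->
          theta (madd (mscal a X) (mscal b Y))
            = Cadd (Cscal a (theta X)) (Cscal b (theta Y))) /\
       (forall X0 : mat, in_g X0 -> forall eps : R, 0 < eps ->
          exists delta : R, 0 < delta /\
            forall X : mat, in_g X -> gnorm (msub X X0) < delta ->
              Cabs (Csub (theta X) (theta X0)) < eps) /\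
       (forall X Y : mat, in_g X -> in_g Y -> omega X Y = theta (bracket X Y))).
Proof.
  intros [theta [Hlin [Hcont Hbr]]].
  set (Q := Pm 1 1).
  assert (HQ : in_g Q) by (apply Pm_ing; lia).
  assert (EX0 : madd (mscal 0 Q) (mscal 0 Q) = Pm 0 1).
  { apply functional_extensionality; intro m; apply functional_extensionality; intro n.
    unfold Q, Pm, madd, mscal, Cadd, Cscal. tpsolve. }
  set (X0 := Pm 0 1).
  assert (HX0 : in_g X0) by (apply Pm_ing; lia).
  assert (T0 : theta X0 = Cadd (Cscal 0 (theta Q)) (Cscal 0 (theta Q))) by (unfold X0; rewrite <- EX0; apply Hlin; auto).
  destruct (Hcont X0 HX0 1 Rlt_0_1) as [d [Hd Hc]].
  destruct (archimed (2 / d)) as [Hup _].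
  set (n := Z.to_nat (up (2 / d))).
  set (p := Z.of_nat (S n)).
  assert (Hp0 : p <> 0%Z) by (unfold p; lia).
  assert (Hpd : 2 / d < IZR p).
  { unfold p. rewrite <- INR_IZR_INZ. rewrite S_INR. unfold n.
    destruct (Z_lt_le_dec (up (2 / d)) 0).
    - replace (Z.to_nat (up (2 / d))) with 0%nat by lia. simpl. assert (2 / d > 0) by (apply Rdiv_lt_0_compat; lra). apply IZR_lt in l. lra.
    - rewrite INR_IZR_INZ, Z2Nat.id by lia. lra. }
  set (P := Pm 1 p).
  assert (HP : in_g P) by (apply Pm_ing; auto).
  assert (E2 : madd (mscal 2 P) (mscal 0 P) = Pm 2 p).
  { apply functional_extensionality; intro m; apply functional_extensionality; intro k.
    unfold P, Pm, madd, mscal, Cadd, Cscal. tpsolve. }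
  assert (Th : omega (Xm p) (Ym p) = Cadd (Cscal 2 (theta P)) (Cscal 0 (theta P))).
  { rewrite Hbr by (apply Xm_ing || apply Ym_ing; auto). rewrite bracket_XY by auto. rewrite <- E2. apply Hlin; auto. }
  rewrite omega_XY in Th by auto.
  destruct (theta P) as [u v] eqn:EP. unfold Cadd, Cscal in Th; simpl in Th. injection Th as Th1 Th2.
  assert (Eh : madd (mscal (d / 2) P) (mscal 0 P) = Pm (d / 2) p).
  { apply functional_extensionality; intro m; apply functional_extensionality; intro k.
    unfold P, Pm, madd, mscal, Cadd, Cscal. tpsolve. }
  set (X := Pm (d / 2) p).
  assert (HX : in_g X) by (apply Pm_ing; auto).
  assert (TX : theta X = Cadd (Cscal (d / 2) (theta P)) (Cscal 0 (theta P))) by (unfold X; rewrite <- Eh; apply Hlin; auto).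
  assert (Es : msub X X0 = Pm (d / 2) p).
  { apply functional_extensionality; intro m; apply functional_extensionality; intro k.
    unfold X, X0, Pm, msub, Csub, Cadd, Copp. unfold tp, C0. repeat destruct (Z.eq_dec _ _); subst; try (exfalso; lia); simpl; f_equal; ring. }
  assert (Hg : gnorm (msub X X0) < d).
  { rewrite Es. eapply Rle_lt_trans. apply gnorm_Pm; auto; lra. lra. }
  specialize (Hc X HX Hg).
  rewrite TX, T0, EP in Hc. destruct (theta Q) as [u' v'].
  unfold Csub, Cadd, Cscal, Copp in Hc; simpl in Hc.
  assert (Hab : forall a b, Rabs b <= Cabs (a, b)).
  { intros a b. rewrite <- Cabs_0y. unfold Cabs, Cnorm2; simpl. apply sqrt_le_1_alt. pose proof (sqnn a). lra. }
  pose proof (Hab (d / 2 * u + 0 * u + - (0 * u' + 0 * u')) (d / 2 * v + 0 * v + - (0 * v' + 0 * v'))).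
  replace (d / 2 * v + 0 * v + - (0 * v' + 0 * v')) with (d / 2 * IZR p) in H, Hc by (assert (v = IZR p) by lra; subst; ring).
  assert (d / 2 * IZR p > 1).
  { apply Rmult_lt_compat_l with (r := d / 2) in Hpd; [|lra]. replace (d / 2 * (2 / d)) with 1 in Hpd by (field; lra). lra. }
  rewrite Rabs_pos_eq in H by lra. lra.
Qed.

Theorem lemma2p1 :
  (* real bilinearity *)
  (forall (X Y Z : mat) (a b : R), in_g X -> in_g Y -> in_g Z ->
     omega (madd (mscal a X) (mscal b Y)) Z
       = Cadd (Cscal a (omega X Z)) (Cscal b (omega Y Z))) /\
  (forall (X Y Z : mat) (a b : R), in_g X -> in_g Y -> in_g Z ->
     omega X (madd (mscal a Y) (mscal b Z))
       = Cadd (Cscal a (omega X Y)) (Cscal b (omega X Z))) /\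
  (* skew-symmetry *)
  (forall X Y : mat, in_g X -> in_g Y -> omega X Y = Copp (omega Y X)) /\
  (* cocycle identity *)
  (forall X Y Z : mat, in_g X -> in_g Y -> in_g Z ->
     Cadd (Cadd (omega X (bracket Y Z)) (omega Y (bracket Z X)))
          (omega Z (bracket X Y)) = C0) /\
  (* continuity on g x g *)
  (forall X0 Y0 : mat, in_g X0 -> in_g Y0 -> forall eps : R, 0 < eps ->
     exists delta : R, 0 < delta /\
       forall X Y : mat, in_g X -> in_g Y ->
         gnorm (msub X X0) < delta -> gnorm (msub Y Y0) < delta ->
         Cabs (Csub (omega X Y) (omega X0 Y0)) < eps) /\
  (* non-triviality *)
  ~ (exists theta : mat -> Cx,
       (forall (X Y : mat) (a b : R), in_g X -> in_g Y ->
          theta (madd (mscal a X) (mscal b Y))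
            = Cadd (Cscal a (theta X)) (Cscal b (theta Y))) /\
       (forall X0 : mat, in_g X0 -> forall eps : R, 0 < eps ->
          exists delta : R, 0 < delta /\
            forall X : mat, in_g X -> gnorm (msub X X0) < delta ->
              Cabs (Csub (theta X) (theta X0)) < eps) /\
       (forall X Y : mat, in_g X -> in_g Y -> omega X Y = theta (bracket X Y))).
Proof.
  split; [exact omega_lin1|]. split; [exact omega_lin2|]. split; [exact omega_skew|].
  split; [exact cocycle|]. split; [exact omega_cont|]. exact nontrivial.
Qed.
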